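(* Let $L$ be a pentagonal linkage with positive charges $q_1,\dots,q_5>0$ at the vertices and effective Coulomb potential $E=\frac{q_2q_5}{b_1}+\frac{q_1q_3}{b_2}+\frac{q_2q_4}{b_3}+\frac{q_3q_5}{b_4}+\frac{q_1q_4}{b_5}$. Let $X_k=\{P\in\overline{M^C}(L): b_4=k\}$ be a slice, parameterized on its relative interior by $x_2$. Then $\frac{d^2}{dx_2^2}\big(E|_{X_k}\big)>0$ on the relative interior of $X_k$.
   Context: A pentagonal linkage $L$ is given by side lengths $a_1,\dots,a_5>0$; $M(L)$ is the set of planar 5-gons $(A_1,\dots,A_5)$ with $|A_iA_{i+1}|=a_i$ (indices mod 5) modulo all isometries of $\mathbb{R}^2$; $M^C(L)$ is the set of strictly convex configurations (convex pentagon $A_1\dots A_5$ in this cyclic order, no angle equal to $\pi$) and $\overline{M^C}(L)$ its closure. $b_i=|A_{i-1}A_{i+1}|$, $x_i=b_i^2$ (indices mod 5). *)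

(* Defs.v *)
From Stdlib Require Import Reals Lra Arith.
From Coquelicot Require Import Coquelicot.
Open Scope R_scope.

(* A planar 5-gon is given by A : nat -> R*R ; the vertex A_i of the paper
   (indices mod 5, paper numbering 1..5) is  pt A i := A (i mod 5),
   so A_5 = A_0 = A 0. *)
Definition pt (A : nat -> R * R) (i : nat) : R * R := A (i mod 5)%nat.

Definition dist2 (P Q : R * R) : R :=
  Rsqr (fst P - fst Q) + Rsqr (snd P - snd Q).
Definition dist (P Q : R * R) : R := sqrt (dist2 P Q).

Definition cross (P Q S : R * R) : R :=
  (fst Q - fst P) * (snd S - snd P) - (snd Q - snd P) * (fst S - fst P).

Definition has_sides (a : nat -> R) (A : nat -> R * R) : Prop :=
  forall i, (1 <= i <= 5)%nat -> dist (pt A i) (pt A (S i)) = a i.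

Definition strictly_convex (A : nat -> R * R) : Prop :=
  exists s : R, (s = 1 \/ s = -1) /\
    forall i j : nat, (1 <= i <= 5)%nat -> (1 <= j <= 5)%nat ->
      (j mod 5 <> i mod 5)%nat -> (j mod 5 <> (S i) mod 5)%nat ->
      0 < s * cross (pt A i) (pt A (S i)) (pt A j).

(* configurations of M^C(L) (representatives) *)
Definition in_MC (a : nat -> R) (A : nat -> R * R) : Prop :=
  has_sides a A /\ strictly_convex A.

(* Since M^C(L) is
   isometry invariant and the quotient map by isometries is open, this is
   the preimage of the closure of M^C(L) in M(L). *)
Definition in_closure_MC (a : nat -> R) (A : nat -> R * R) : Prop :=
  has_sides a A /\
  forall eps, 0 < eps ->
    exists B, in_MC a B /\
      forall i, (1 <= i <= 5)%nat -> dist (pt A i) (pt B i) < eps.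

(* diagonals b_i = |A_{i-1} A_{i+1}|, x_i = b_i^2 *)
Definition b (A : nat -> R * R) (i : nat) : R := dist (pt A (i + 4)) (pt A (S i)).
Definition x (A : nat -> R * R) (i : nat) : R := Rsqr (b A i).

Definition energy (q : nat -> R) (A : nat -> R * R) : R :=
  q 2%nat * q 5%nat / b A 1 + q 1%nat * q 3%nat / b A 2
  + q 2%nat * q 4%nat / b A 3 + q 3%nat * q 5%nat / b A 4
  + q 1%nat * q 4%nat / b A 5.

Definition in_slice (a : nat -> R) (k : R) (A : nat -> R * R) : Prop :=
  in_closure_MC a A /\ b A 4 = k.

Definition interior_pt (I : R -> Prop) (t : R) : Prop :=
  exists d, 0 < d /\ forall u, Rabs (u - t) < d -> I u.

(* Main.v *)
Require Import Defs.
From Stdlib Require Import Reals.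
From Coquelicot Require Import Coquelicot.
Open Scope R_scope.
From Stdlib Require Import Lra Psatz ZArith IndefiniteDescription.
Require Import Defs.
Open Scope R_scope.


Definition D2 (f f1 f2 : R -> R) (t : R) :=
  exists d, 0 < d /\ forall u, Rabs (u - t) < d ->
    is_derive f u (f1 u) /\ is_derive f1 u (f2 u).

Lemma loc_ball (t d u : R) : Rabs (u - t) < d ->
  locally u (fun y => Rabs (y - t) < d).
Proof.
  intros H. assert (Hp : 0 < d - Rabs (u - t)) by lra.
  exists (mkposreal _ Hp). intros y Hy. simpl in Hy.
  change (Rabs (y - u) < d - Rabs (u - t)) in Hy.
  replace (y - t) with ((y - u) + (u - t)) by ring.
  pose proof (Rabs_triang (y - u) (u - t)). lra.
Qed.

Lemma D2_final f f1 f2 t : D2 f f1 f2 t ->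
  (exists d, 0 < d /\ forall u, Rabs (u - t) < d -> ex_derive f u) /\
  ex_derive_n f 2 t /\ Derive_n f 2 t = f2 t.
Proof.
  intros [d [Hd H]]. split.
  { exists d; split; auto. intros u Hu. exists (f1 u). apply H; auto. }
  assert (Hloc : locally t (fun y => Derive_n f 1 y = f1 y)).
  { eapply filter_imp; [| apply (loc_ball t d t)].
    - intros y Hy. simpl. apply is_derive_unique.
      eapply is_derive_ext; [| apply (H y Hy)]. intros; reflexivity.
    - rewrite Rminus_diag, Rabs_R0; lra. }
  assert (Ht : Rabs (t - t) < d) by (rewrite Rminus_diag, Rabs_R0; lra).
  split.
  - simpl. apply (ex_derive_ext_loc f1).
    + eapply filter_imp; [| exact Hloc]. intros y Hy. simpl in Hy. rewrite <- Hy. reflexivity.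
    + exists (f2 t). apply H; auto.
  - change (Derive (Derive_n f 1) t = f2 t).
    rewrite (Derive_ext_loc _ f1 t Hloc). apply is_derive_unique. apply H; auto.
Qed.

Lemma D2_shrink f f1 f2 t : D2 f f1 f2 t -> forall d', 0 < d' ->
  exists d, 0 < d /\ d <= d' /\ forall u, Rabs (u - t) < d ->
    is_derive f u (f1 u) /\ is_derive f1 u (f2 u).
Proof.
  intros [d [Hd H]] d' Hd'. exists (Rmin d d'). split; [apply Rmin_pos; auto|].
  split; [apply Rmin_r|].
  intros u Hu. apply H. pose proof (Rmin_l d d'). lra.
Qed.

Lemma D2_ext f g f1 f2 t d0 : 0 < d0 -> (forall u, Rabs (u - t) < d0 -> f u = g u) ->
  D2 f f1 f2 t -> D2 g f1 f2 t.
Proof.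
  intros Hd0 Heq HD. destruct (D2_shrink _ _ _ _ HD d0 Hd0) as [d [Hd [Hle H]]].
  exists d; split; auto. intros u Hu. destruct (H u Hu) as [H1 H2]. split; auto.
  apply (is_derive_ext_loc f); auto.
  eapply filter_imp; [| apply (loc_ball t d u Hu)]. intros y Hy. apply Heq. lra.
Qed.

Lemma D2_ext2 f f1 f2 g1 g2 t d0 : 0 < d0 ->
  (forall u, Rabs (u - t) < d0 -> f1 u = g1 u /\ f2 u = g2 u) ->
  D2 f f1 f2 t -> D2 f g1 g2 t.
Proof.
  intros Hd0 Heq HD. destruct (D2_shrink _ _ _ _ HD d0 Hd0) as [d [Hd [Hle H]]].
  exists d; split; auto. intros u Hu. destruct (H u Hu) as [H1 H2].
  assert (Hu0 : Rabs (u - t) < d0) by lra.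
  destruct (Heq u Hu0) as [E1 E2]. split.
  - rewrite <- E1; auto.
  - rewrite <- E2. apply (is_derive_ext_loc f1); auto.
    eapply filter_imp; [| apply (loc_ball t d u Hu)]. intros y Hy. apply Heq. lra.
Qed.

Lemma isd_eq (f : R -> R) x l l' : is_derive f x l -> l = l' -> is_derive f x l'.
Proof. intros H ->; exact H. Qed.

Lemma isd_plus (f g : R -> R) x df dg : is_derive f x df -> is_derive g x dg ->
  is_derive (fun y => f y + g y) x (df + dg).
Proof. intros H1 H2. exact (is_derive_plus f g x df dg H1 H2). Qed.

Lemma isd_mult (f g : R -> R) x df dg : is_derive f x df -> is_derive g x dg ->
  is_derive (fun y => f y * g y) x (df * g x + f x * dg).
Proof. intros H1 H2. exact (is_derive_mult f g x df dg H1 H2 Rmult_comm). Qed.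

Lemma D2_const c t : D2 (fun _ => c) (fun _ => 0) (fun _ => 0) t.
Proof. exists 1; split; [lra|]. intros u _; split; (eapply isd_eq; [apply (is_derive_const _ u)|reflexivity]). Qed.

Lemma D2_id t : D2 (fun u => u) (fun _ => 1) (fun _ => 0) t.
Proof. exists 1; split; [lra|]. intros u _; split; (eapply isd_eq; [first [apply (is_derive_id u)|apply (is_derive_const _ u)]|reflexivity]). Qed.

Lemma D2_plus f f1 f2 g g1 g2 t : D2 f f1 f2 t -> D2 g g1 g2 t ->
  D2 (fun u => f u + g u) (fun u => f1 u + g1 u) (fun u => f2 u + g2 u) t.
Proof.
  intros [d [Hd H]] [e [He G]]. exists (Rmin d e). split; [apply Rmin_pos; auto|].
  intros u Hu. pose proof (Rmin_l d e); pose proof (Rmin_r d e).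
  destruct (H u ltac:(lra)); destruct (G u ltac:(lra)).
  split; apply isd_plus; auto.
Qed.

Lemma D2_scal c f f1 f2 t : D2 f f1 f2 t ->
  D2 (fun u => c * f u) (fun u => c * f1 u) (fun u => c * f2 u) t.
Proof.
  intros [d [Hd H]]. exists d; split; auto. intros u Hu. destruct (H u Hu).
  split; apply is_derive_scal; auto.
Qed.

Lemma D2_mult f f1 f2 g g1 g2 t : D2 f f1 f2 t -> D2 g g1 g2 t ->
  D2 (fun u => f u * g u) (fun u => f1 u * g u + f u * g1 u)
     (fun u => f2 u * g u + f1 u * g1 u + (f1 u * g1 u + f u * g2 u)) t.
Proof.
  intros [d [Hd H]] [e [He G]]. exists (Rmin d e). split; [apply Rmin_pos; auto|].
  intros u Hu. pose proof (Rmin_l d e); pose proof (Rmin_r d e).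
  destruct (H u ltac:(lra)) as [H2 H3]; destruct (G u ltac:(lra)) as [H4 H5].
  split.
  - apply isd_mult; auto.
  - pose proof (isd_mult f1 g u _ _ H3 H4) as X1.
    pose proof (isd_mult f g1 u _ _ H2 H5) as X2.
    pose proof (isd_plus (fun y => f1 y * g y) (fun y => f y * g1 y) u _ _ X1 X2) as X.
    exact X.
Qed.


Lemma D2_comp (phi phi1 phi2 : R -> R) (Dom : R -> Prop) f f1 f2 t :
  (forall y, Dom y -> is_derive phi y (phi1 y) /\ is_derive phi1 y (phi2 y)) ->
  D2 f f1 f2 t -> (exists d, 0 < d /\ forall u, Rabs (u - t) < d -> Dom (f u)) ->
  D2 (fun u => phi (f u)) (fun u => phi1 (f u) * f1 u)
     (fun u => phi2 (f u) * f1 u * f1 u + phi1 (f u) * f2 u) t.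
Proof.
  intros Hphi [d [Hd H]] [e [He HD]]. exists (Rmin d e). split; [apply Rmin_pos; auto|].
  intros u Hu. pose proof (Rmin_l d e); pose proof (Rmin_r d e).
  destruct (H u ltac:(lra)) as [H2 H3]. pose proof (HD u ltac:(lra)) as Hdu.
  destruct (Hphi _ Hdu) as [P1 P2].
  assert (C1 : is_derive (fun y => phi1 (f y)) u (phi2 (f u) * f1 u)).
  { eapply isd_eq; [apply (is_derive_comp phi1 f u _ _ P2 H2)|]. simpl. unfold scal; simpl. unfold mult; simpl. ring. }
  split.
  - eapply isd_eq; [apply (is_derive_comp phi f u _ _ P1 H2)|]. simpl. unfold scal; simpl. unfold mult; simpl. ring.
  - exact (isd_mult _ _ u _ _ C1 H3).
Qed.

Lemma sqrt_d2 y : 0 < y ->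
  is_derive sqrt y (/ (2 * sqrt y)) /\ is_derive (fun z => / (2 * sqrt z)) y (- / (4 * y * sqrt y)).
Proof.
  intros Hy. pose proof (sqrt_lt_R0 y Hy). pose proof (sqrt_sqrt y (Rlt_le _ _ Hy)).
  split.
  - auto_derive; auto. field. lra.
  - auto_derive; [split; auto; lra|]. remember (sqrt y) as s. rewrite <- H0. field. lra.
Qed.

Lemma invsqrt_d2 y : 0 < y ->
  is_derive (fun z => / sqrt z) y (- / (2 * y * sqrt y)) /\
  is_derive (fun z => - / (2 * z * sqrt z)) y (3 / (4 * y * y * sqrt y)).
Proof.
  intros Hy. pose proof (sqrt_lt_R0 y Hy). pose proof (sqrt_sqrt y (Rlt_le _ _ Hy)).
  split.
  - auto_derive; [split; auto; lra|]. remember (sqrt y) as s. rewrite <- H0. field. lra.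
  - auto_derive; [repeat split; auto; try lra; nra|]. remember (sqrt y) as s. rewrite <- H0. field. lra.
Qed.


Lemma Rdiv_le_0_compat a b : 0 <= a -> 0 < b -> 0 <= a / b.
Proof. intros. unfold Rdiv. apply Rmult_le_pos; auto. left; apply Rinv_0_lt_compat; auto. Qed.

Lemma dist2_ge0 P Q : 0 <= dist2 P Q.
Proof. unfold dist2. apply Rplus_le_le_0_compat; apply Rle_0_sqr. Qed.

Lemma dist_ge0 P Q : 0 <= dist P Q.
Proof. apply sqrt_pos. Qed.

Lemma dist_sq P Q : dist P Q * dist P Q = dist2 P Q.
Proof. apply sqrt_sqrt, dist2_ge0. Qed.

Lemma dist_sym P Q : dist P Q = dist Q P.
Proof. unfold dist, dist2, Rsqr. f_equal. ring. Qed.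

Lemma dist_triang P Q R : dist P R <= dist P Q + dist Q R.
Proof.
  pose proof (dist_sq P Q) as E1. pose proof (dist_sq Q R) as E2. pose proof (dist_sq P R) as E3.
  pose proof (dist_ge0 P Q). pose proof (dist_ge0 Q R). pose proof (dist_ge0 P R).
  destruct P as [p1 p2]; destruct Q as [q1 q2]; destruct R as [r1 r2].
  unfold dist2, Rsqr in *; simpl in *.
  set (s := dist (p1,p2) (q1,q2)) in *. set (t := dist (q1,q2) (r1,r2)) in *.
  set (r := dist (p1,p2) (r1,r2)) in *.
  assert (Hcs : (p1 - q1) * (q1 - r1) + (p2 - q2) * (q2 - r2) <= s * t).
  { assert (Hsq: ((p1 - q1) * (q1 - r1) + (p2 - q2) * (q2 - r2))^2 <= (s*t)^2).
    { replace ((s*t)^2) with ((s*s)*(t*t)) by ring. rewrite E1, E2.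
      set (a1 := p1 - q1). set (a2 := p2 - q2). set (b1 := q1 - r1). set (b2 := q2 - r2).
      assert (0 <= (a1*b2 - a2*b1)^2) by (apply pow2_ge_0).
      assert (HH: (a1 * a1 + a2 * a2) * (b1 * b1 + b2 * b2) - (a1 * b1 + a2 * b2) ^ 2 = (a1*b2 - a2*b1)^2) by ring.
      lra. }
    assert (0 <= s * t) by (apply Rmult_le_pos; auto).
    destruct (Rle_dec ((p1 - q1) * (q1 - r1) + (p2 - q2) * (q2 - r2)) 0); [lra|].
    apply Rsqr_incr_0_var; unfold Rsqr; auto; lra. }
  assert (r * r <= (s + t) * (s + t)) by nra.
  nra.
Qed.

Lemma dist_eq0 P Q : dist P Q = 0 -> P = Q.
Proof.
  intros H. pose proof (dist_sq P Q) as E. rewrite H in E.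
  destruct P as [p1 p2]; destruct Q as [q1 q2]. unfold dist2, Rsqr in E; simpl in E.
  pose proof (Rle_0_sqr (p1 - q1)); pose proof (Rle_0_sqr (p2 - q2)); unfold Rsqr in *.
  assert (Ha : (p1 - q1) * (p1 - q1) = 0) by lra.
  assert (Hb : (p2 - q2) * (p2 - q2) = 0) by lra.
  apply Rmult_integral in Ha; apply Rmult_integral in Hb.
  assert (p1 = q1) by (destruct Ha; lra). assert (p2 = q2) by (destruct Hb; lra). subst; reflexivity.
Qed.

Lemma dist_scale (Q S : R * R) (m : R) : 0 <= m ->
  dist Q (fst Q + m * (fst S - fst Q), snd Q + m * (snd S - snd Q)) = m * dist Q S.
Proof.
  intros Hm. unfold dist, dist2, Rsqr; simpl.
  replace ((fst Q - (fst Q + m * (fst S - fst Q))) * (fst Q - (fst Q + m * (fst S - fst Q))) +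
    (snd Q - (snd Q + m * (snd S - snd Q))) * (snd Q - (snd Q + m * (snd S - snd Q))))
   with ((m*m) * ((fst Q - fst S) * (fst Q - fst S) + (snd Q - snd S) * (snd Q - snd S))) by ring.
  rewrite sqrt_mult; [| apply Rle_0_sqr | apply Rplus_le_le_0_compat; apply Rle_0_sqr]. rewrite sqrt_square; auto.
Qed.

(* convex quadrilateral P Q R S : diagonals PR and QS cross *)
Lemma quad_ineq (P Q R S : R * R) :
  cross P R Q * cross P R S < 0 -> cross Q S P * cross Q S R < 0 ->
  dist P Q + dist P S - 2 * dist P R <= dist Q S.
Proof.
  intros H1 H2.
  set (c2 := cross P R Q) in *. set (c4 := cross P R S) in *.
  set (d1 := cross Q S P) in *. set (d3 := cross Q S R) in *.
  assert (Hc : c2 - c4 <> 0) by nra. assert (Hd : d1 - d3 <> 0) by nra.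
  set (mu := c2 / (c2 - c4)). set (tt := d1 / (d1 - d3)).
  assert (Hmu : 0 <= mu <= 1).
  { unfold mu. destruct (Rlt_dec 0 c2).
    - assert (c4 < 0) by nra. split; [apply Rdiv_le_0_compat; lra|].
      apply Rmult_le_reg_r with (c2 - c4); [lra|]. unfold Rdiv. rewrite Rmult_assoc, Rinv_l; lra.
    - assert (c2 < 0) by nra. assert (0 < c4) by nra.
      replace (c2 / (c2 - c4)) with ((-c2) / (c4 - c2)) by (field; lra).
      split; [apply Rdiv_le_0_compat; lra|].
      apply Rmult_le_reg_r with (c4 - c2); [lra|]. unfold Rdiv. rewrite Rmult_assoc, Rinv_l; lra. }
  assert (Htt : 0 <= tt <= 1).
  { unfold tt. destruct (Rlt_dec 0 d1).
    - assert (d3 < 0) by nra. split; [apply Rdiv_le_0_compat; lra|].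
      apply Rmult_le_reg_r with (d1 - d3); [lra|]. unfold Rdiv. rewrite Rmult_assoc, Rinv_l; lra.
    - assert (d1 < 0) by nra. assert (0 < d3) by nra.
      replace (d1 / (d1 - d3)) with ((-d1) / (d3 - d1)) by (field; lra).
      split; [apply Rdiv_le_0_compat; lra|].
      apply Rmult_le_reg_r with (d3 - d1); [lra|]. unfold Rdiv. rewrite Rmult_assoc, Rinv_l; lra. }
  set (O := (fst Q + mu * (fst S - fst Q), snd Q + mu * (snd S - snd Q))).
  assert (HO : O = (fst P + tt * (fst R - fst P), snd P + tt * (snd R - snd P))).
  { unfold O, mu, tt, c2, c4, d1, d3 in *. unfold cross in *.
    destruct P as [p1 p2]; destruct Q as [q1 q2]; destruct R as [r1 r2]; destruct S as [s1 s2].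
    simpl in *. f_equal; field; split; auto. }
  assert (E1 : dist Q O = mu * dist Q S) by (apply dist_scale; lra).
  assert (E2 : dist O S = (1 - mu) * dist Q S).
  { rewrite dist_sym. unfold O.
    replace (fst Q + mu * (fst S - fst Q)) with (fst S + (1 - mu) * (fst Q - fst S)) by ring.
    replace (snd Q + mu * (snd S - snd Q)) with (snd S + (1 - mu) * (snd Q - snd S)) by ring.
    rewrite dist_scale by lra. rewrite dist_sym. reflexivity. }
  assert (E3 : dist P O = tt * dist P R) by (rewrite HO; apply dist_scale; lra).
  pose proof (dist_triang P O Q) as T1. pose proof (dist_triang P O S) as T2.
  rewrite (dist_sym O Q) in T1. pose proof (dist_ge0 P R).
  assert (tt * dist P R <= dist P R) by nra.
  nra.
Qed.


Lemma lim_inv_n : is_lim_seq (fun n => / (INR n + 1)) 0.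
Proof.
  apply is_lim_seq_spec. intros eps.
  destruct (archimed (/ eps)) as [Hup _].
  assert (Hpos : 0 < / eps) by (apply Rinv_0_lt_compat; apply cond_pos).
  exists (Z.to_nat (up (/ eps))). intros n Hn.
  assert (HN : IZR (up (/ eps)) <= INR n).
  { assert (0 <= up (/ eps))%Z. { apply le_IZR. lra. }
    rewrite <- (Z2Nat.id (up (/eps))) by auto. rewrite <- INR_IZR_INZ. apply le_INR; auto. }
  rewrite Rminus_0_r. rewrite Rabs_pos_eq.
  - pose proof (cond_pos eps).
    apply Rmult_lt_reg_l with (INR n + 1); [pose proof (pos_INR n); lra|].
    rewrite Rinv_r by (pose proof (pos_INR n); lra).
    apply Rmult_lt_reg_l with (/ eps); auto.
    replace (/ eps * ((INR n + 1) * eps)) with (INR n + 1) by (field; lra). lra.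
  - left. apply Rinv_0_lt_compat. pose proof (pos_INR n); lra.
Qed.

Lemma fst_le_dist P Q : Rabs (fst P - fst Q) <= dist P Q.
Proof.
  unfold dist, dist2. rewrite <- sqrt_Rsqr_abs. apply sqrt_le_1_alt.
  pose proof (Rle_0_sqr (snd P - snd Q)). lra.
Qed.

Lemma snd_le_dist P Q : Rabs (snd P - snd Q) <= dist P Q.
Proof.
  unfold dist, dist2. rewrite <- sqrt_Rsqr_abs. apply sqrt_le_1_alt.
  pose proof (Rle_0_sqr (fst P - fst Q)). lra.
Qed.

Lemma lim_of_dist (u : nat -> R) (l : R) :
  (forall n, Rabs (u n - l) <= / (INR n + 1)) -> is_lim_seq u l.
Proof.
  intros H.
  assert (H0 : is_lim_seq (fun n => Rabs (u n - l)) 0).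
  { apply is_lim_seq_le_le with (u := fun _ => 0) (w := fun n => / (INR n + 1)).
    - intros n; split; [apply Rabs_pos| apply H].
    - apply is_lim_seq_const.
    - apply lim_inv_n. }
  apply is_lim_seq_abs_0 in H0.
  apply is_lim_seq_ext with (u := fun n => (u n - l) + l); [intros; ring|].
  replace (Finite l) with (Rbar_plus 0 l) by (simpl; f_equal; ring).
  apply is_lim_seq_plus'; [exact H0| apply is_lim_seq_const].
Qed.

Definition conv (B : nat -> nat -> R * R) (A : nat -> R * R) :=
  forall j, (j < 5)%nat -> is_lim_seq (fun n => fst (B n j)) (fst (A j)) /\
            is_lim_seq (fun n => snd (B n j)) (snd (A j)).

Lemma closure_seq a A : in_closure_MC a A ->
  exists B : nat -> nat -> R * R, (forall n, in_MC a (B n)) /\ conv B A.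
Proof.
  intros [_ HC].
  assert (Hex : forall n : nat, exists B, in_MC a B /\
     forall i, (1 <= i <= 5)%nat -> dist (pt A i) (pt B i) < / (INR n + 1)).
  { intros n. apply HC. apply Rinv_0_lt_compat. pose proof (pos_INR n); lra. }
  exists (fun n => proj1_sig (constructive_indefinite_description _ (Hex n))).
  split.
  - intros n. exact (proj1 (proj2_sig (constructive_indefinite_description _ (Hex n)))).
  - intros j Hj.
    assert (Hi : exists i, (1 <= i <= 5)%nat /\ (i mod 5 = j)%nat).
    { destruct j as [|[|[|[|[|j]]]]]; [exists 5%nat|exists 1%nat|exists 2%nat|exists 3%nat|exists 4%nat|lia];
      split; try lia; reflexivity. }
    destruct Hi as [i [Hi Hij]].
    split; apply lim_of_dist; intros n;
    destruct (proj2_sig (constructive_indefinite_description _ (Hex n))) as [HB0 HB];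
    set (B := proj1_sig (constructive_indefinite_description _ (Hex n))) in *;
    specialize (HB i Hi); unfold pt in HB; rewrite Hij in HB; rewrite dist_sym in HB.
    + pose proof (fst_le_dist (B j) (A j)). lra.
    + pose proof (snd_le_dist (B j) (A j)). lra.
Qed.

Lemma conv_pt B A i : conv B A ->
  is_lim_seq (fun n => fst (pt (B n) i)) (fst (pt A i)) /\
  is_lim_seq (fun n => snd (pt (B n) i)) (snd (pt A i)).
Proof. intros H. unfold pt. apply H. apply Nat.mod_upper_bound. lia. Qed.

Lemma lim_cross B A i j l : conv B A ->
  is_lim_seq (fun n => cross (pt (B n) i) (pt (B n) j) (pt (B n) l)) (cross (pt A i) (pt A j) (pt A l)).
Proof.
  intros H. destruct (conv_pt B A i H) as [Xi Yi]. destruct (conv_pt B A j H) as [Xj Yj].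
  destruct (conv_pt B A l H) as [Xl Yl]. unfold cross.
  apply is_lim_seq_minus'; apply is_lim_seq_mult'; apply is_lim_seq_minus'; auto.
Qed.

Lemma lim_dist B A i j : conv B A ->
  is_lim_seq (fun n => dist (pt (B n) i) (pt (B n) j)) (dist (pt A i) (pt A j)).
Proof.
  intros H. destruct (conv_pt B A i H) as [Xi Yi]. destruct (conv_pt B A j H) as [Xj Yj].
  unfold dist. apply (is_lim_seq_continuous sqrt (fun n => dist2 (pt (B n) i) (pt (B n) j))).
  - apply continuity_pt_sqrt. apply dist2_ge0.
  - unfold dist2, Rsqr. apply is_lim_seq_plus'; apply is_lim_seq_mult'; apply is_lim_seq_minus'; auto.
Qed.

Lemma lim_ge0 (u : nat -> R) (l : R) : (forall n, 0 <= u n) -> is_lim_seq u l -> 0 <= l.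
Proof.
  intros H Hl. assert (X := is_lim_seq_le (fun _ => 0) u 0 l H (is_lim_seq_const 0) Hl).
  simpl in X. exact X.
Qed.


Definition E (A : nat -> R * R) (i j : nat) := cross (pt A i) (pt A (S i)) (pt A j).

Definition valid (i j : nat) := (1 <= i <= 5)%nat /\ (1 <= j <= 5)%nat /\
  (j mod 5 <> i mod 5)%nat /\ (j mod 5 <> (S i) mod 5)%nat.

Lemma MC_prod a B i j i' j' : valid i j -> valid i' j' -> in_MC a B ->
  0 < E B i j * E B i' j'.
Proof.
  intros [H1 [H2 [H3 H4]]] [H1' [H2' [H3' H4']]] [_ [s [Hs HC]]].
  pose proof (HC i j H1 H2 H3 H4). pose proof (HC i' j' H1' H2' H3' H4').
  unfold E. destruct Hs; subst; nra.
Qed.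

Lemma closure_prod a A i j i' j' : valid i j -> valid i' j' -> in_closure_MC a A ->
  0 <= E A i j * E A i' j'.
Proof.
  intros V V' HA. destruct (closure_seq a A HA) as [B [HB HcB]].
  apply (lim_ge0 (fun n => E (B n) i j * E (B n) i' j')).
  - intros n. left. apply (MC_prod a); auto.
  - unfold E. apply is_lim_seq_mult'; apply lim_cross; auto.
Qed.

Ltac valid_tac := unfold valid; repeat split; try lia; simpl; discriminate.

Lemma closure_quad a A p q r s :
  (forall B, in_MC a B -> cross (pt B p) (pt B r) (pt B q) * cross (pt B p) (pt B r) (pt B s) < 0 /\
                     cross (pt B q) (pt B s) (pt B p) * cross (pt B q) (pt B s) (pt B r) < 0) ->
  in_closure_MC a A ->
  dist (pt A p) (pt A q) + dist (pt A p) (pt A s) - 2 * dist (pt A p) (pt A r) <= dist (pt A q) (pt A s).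
Proof.
  intros HQ HA. destruct (closure_seq a A HA) as [B [HB HcB]].
  assert (0 <= dist (pt A q) (pt A s) - (dist (pt A p) (pt A q) + dist (pt A p) (pt A s) - 2 * dist (pt A p) (pt A r))).
  { apply (lim_ge0 (fun n => dist (pt (B n) q) (pt (B n) s) - (dist (pt (B n) p) (pt (B n) q) + dist (pt (B n) p) (pt (B n) s) - 2 * dist (pt (B n) p) (pt (B n) r)))).
    - intros n. destruct (HQ (B n) (HB n)) as [X Y]. pose proof (quad_ineq _ _ _ _ X Y). lra.
    - apply is_lim_seq_minus'; [apply lim_dist; auto|].
      apply is_lim_seq_minus'; [apply is_lim_seq_plus'; apply lim_dist; auto|].
      apply (is_lim_seq_scal_l _ 2 (dist (pt A p) (pt A r))). apply lim_dist; auto. }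
  lra.
Qed.

Lemma neg_prod x y : 0 < x * y -> (-x) * y < 0.
Proof. intros; nra. Qed.
Lemma neg_prod2 x y : 0 < x * y -> x * (-y) < 0.
Proof. intros; nra. Qed.

Lemma Q1 a A : in_closure_MC a A ->
  dist (pt A 1) (pt A 2) + dist (pt A 1) (pt A 5) - 2 * dist (pt A 1) (pt A 3) <= dist (pt A 2) (pt A 5).
Proof.
  apply closure_quad. intros B HB. split.
  - replace (cross (pt B 1) (pt B 3) (pt B 2)) with (- E B 1 3) by (unfold E, cross, pt; simpl; ring).
    replace (cross (pt B 1) (pt B 3) (pt B 5)) with (E B 5 3) by (unfold E, cross, pt; simpl; ring).
    apply neg_prod. apply (MC_prod a); auto; valid_tac.
  - replace (cross (pt B 2) (pt B 5) (pt B 1)) with (E B 5 2) by (unfold E, cross, pt; simpl; ring).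
    replace (cross (pt B 2) (pt B 5) (pt B 3)) with (- E B 2 5) by (unfold E, cross, pt; simpl; ring).
    apply neg_prod2. apply (MC_prod a); auto; valid_tac.
Qed.

Lemma Q2 a A : in_closure_MC a A ->
  dist (pt A 3) (pt A 2) + dist (pt A 3) (pt A 4) - 2 * dist (pt A 3) (pt A 1) <= dist (pt A 2) (pt A 4).
Proof.
  apply closure_quad. intros B HB. split.
  - replace (cross (pt B 3) (pt B 1) (pt B 2)) with (E B 1 3) by (unfold E, cross, pt; simpl; ring).
    replace (cross (pt B 3) (pt B 1) (pt B 4)) with (- E B 3 1) by (unfold E, cross, pt; simpl; ring).
    apply neg_prod2. apply (MC_prod a); auto; valid_tac.
  - replace (cross (pt B 2) (pt B 4) (pt B 3)) with (- E B 2 4) by (unfold E, cross, pt; simpl; ring).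
    replace (cross (pt B 2) (pt B 4) (pt B 1)) with (E B 1 4) by (unfold E, cross, pt; simpl; ring).
    apply neg_prod. apply (MC_prod a); auto; valid_tac.
Qed.

Lemma Q3 a A : in_closure_MC a A ->
  dist (pt A 5) (pt A 4) + dist (pt A 5) (pt A 1) - 2 * dist (pt A 5) (pt A 3) <= dist (pt A 4) (pt A 1).
Proof.
  apply closure_quad. intros B HB. split.
  - replace (cross (pt B 5) (pt B 3) (pt B 4)) with (E B 3 5) by (unfold E, cross, pt; simpl; ring).
    replace (cross (pt B 5) (pt B 3) (pt B 1)) with (- E B 5 3) by (unfold E, cross, pt; simpl; ring).
    apply neg_prod2. apply (MC_prod a); auto; valid_tac.
  - replace (cross (pt B 4) (pt B 1) (pt B 5)) with (- E B 4 1) by (unfold E, cross, pt; simpl; ring).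
    replace (cross (pt B 4) (pt B 1) (pt B 3)) with (E B 3 1) by (unfold E, cross, pt; simpl; ring).
    apply neg_prod. apply (MC_prod a); auto; valid_tac.
Qed.

Lemma Q4 a A : in_closure_MC a A ->
  dist (pt A 3) (pt A 2) + dist (pt A 3) (pt A 4) - 2 * dist (pt A 3) (pt A 5) <= dist (pt A 2) (pt A 4).
Proof.
  apply closure_quad. intros B HB. split.
  - replace (cross (pt B 3) (pt B 5) (pt B 2)) with (E B 2 5) by (unfold E, cross, pt; simpl; ring).
    replace (cross (pt B 3) (pt B 5) (pt B 4)) with (- E B 3 5) by (unfold E, cross, pt; simpl; ring).
    apply neg_prod2. apply (MC_prod a); auto; valid_tac.
  - replace (cross (pt B 2) (pt B 4) (pt B 3)) with (- E B 2 4) by (unfold E, cross, pt; simpl; ring).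
    replace (cross (pt B 2) (pt B 4) (pt B 5)) with (E B 4 2) by (unfold E, cross, pt; simpl; ring).
    apply neg_prod. apply (MC_prod a); auto; valid_tac.
Qed.


Definition Pf (a : nat -> R) (k u : R) := (k * k + u - a 5%nat * a 5%nat) / 2.
Definition Qf (a : nat -> R) (u : R) := (u + a 2%nat * a 2%nat - a 1%nat * a 1%nat) / 2.
Definition Gf a k u := k * k * u - Pf a k u * Pf a k u.
Definition Hf a u := a 2%nat * a 2%nat * u - Qf a u * Qf a u.
Definition Zc (a : nat -> R) (k : R) := (k * k + a 3%nat * a 3%nat - a 4%nat * a 4%nat) / 2.
Definition Kc a k := k * k * (a 3%nat * a 3%nat) - Zc a k * Zc a k.
Definition UW a k u := Pf a k u * Qf a u / u - sqrt (Gf a k u / u * (Hf a u / u)).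
Definition UxW a k u := (Pf a k u * sqrt (Hf a u) + Qf a u * sqrt (Gf a k u)) / u.
Definition B1 a k u := a 2%nat * a 2%nat + k * k - 2 * UW a k u.
Definition B3 a k u := a 2%nat * a 2%nat + a 3%nat * a 3%nat - 2 * (Zc a k * UW a k u - sqrt (Kc a k) * UxW a k u) / (k * k).
Definition B5 a k u := a 3%nat * a 3%nat + u - 2 * (Zc a k * Pf a k u - sqrt (Kc a k) * sqrt (Gf a k u)) / (k * k).

Lemma sqrt_prod_eq X Y G H : 0 <= X * Y -> X * X = G -> Y * Y = H -> X * Y = sqrt G * sqrt H.
Proof.
  intros HXY HG HH. subst. rewrite <- sqrt_mult by (apply Rle_0_sqr).
  replace (X * X * (Y * Y)) with ((X * Y) * (X * Y)) by ring. rewrite sqrt_square; auto.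
Qed.


Lemma config_alg (a : nat -> R) (k x u1 u2 v1 v2 w1 w2 z1 z2 : R) :
  0 < k -> 0 < x ->
  u1*u1 + u2*u2 = k*k -> v1*v1 + v2*v2 = x ->
  w1*w1 + w2*w2 = a 2%nat * a 2%nat ->
  (w1 - v1)*(w1 - v1) + (w2 - v2)*(w2 - v2) = a 1%nat * a 1%nat ->
  z1*z1 + z2*z2 = a 3%nat * a 3%nat ->
  (u1 - z1)*(u1 - z1) + (u2 - z2)*(u2 - z2) = a 4%nat * a 4%nat ->
  (v1 - u1)*(v1 - u1) + (v2 - u2)*(v2 - u2) = a 5%nat * a 5%nat ->
  let s1 := u1*v2 - u2*v1 in let s2 := v1*w2 - v2*w1 in let s3 := z1*u2 - z2*u1 in
  0 <= s1 * s2 -> 0 <= s1 * s3 -> 0 <= s2 * s3 ->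
  s1 * s1 = Gf a k x /\ s2 * s2 = Hf a x /\ s3 * s3 = Kc a k /\
  (w1 - u1)*(w1 - u1) + (w2 - u2)*(w2 - u2) = B1 a k x /\
  (w1 - z1)*(w1 - z1) + (w2 - z2)*(w2 - z2) = B3 a k x /\
  (z1 - v1)*(z1 - v1) + (z2 - v2)*(z2 - v2) = B5 a k x.
Proof.
  intros Hk Hx Hu Hv Hw H1 Hz H4 H5 s1 s2 s3 P12 P13 P23.
  assert (EP : u1*v1 + u2*v2 = Pf a k x) by (unfold Pf; lra).
  assert (EQ : v1*w1 + v2*w2 = Qf a x) by (unfold Qf; lra).
  assert (EZ : z1*u1 + z2*u2 = Zc a k) by (unfold Zc; lra).
  assert (G1 : s1 * s1 = Gf a k x).
  { unfold Gf. rewrite <- EP, <- Hv. replace (k*k) with (u1*u1+u2*u2) by lra. unfold s1. ring. }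
  assert (G2 : s2 * s2 = Hf a x).
  { unfold Hf. rewrite <- EQ, <- Hv, <- Hw. unfold s2. ring. }
  assert (G3 : s3 * s3 = Kc a k).
  { unfold Kc. rewrite <- EZ, <- Hz. replace (k*k) with (u1*u1+u2*u2) by lra. unfold s3. ring. }
  assert (S12 := sqrt_prod_eq _ _ _ _ P12 G1 G2).
  assert (S13 := sqrt_prod_eq _ _ _ _ P13 G1 G3).
  assert (S23 := sqrt_prod_eq _ _ _ _ P23 G2 G3).
  assert (Hsq : sqrt (Gf a k x / x * (Hf a x / x)) = sqrt (Gf a k x) * sqrt (Hf a x) / x).
  { replace (Gf a k x / x * (Hf a x / x)) with ((Gf a k x * Hf a x) / (x * x)) by (field; lra).
    rewrite sqrt_div_alt by nra. rewrite sqrt_square by lra.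
    rewrite sqrt_mult; auto; [rewrite <- G1 | rewrite <- G2]; apply Rle_0_sqr. }
  assert (UWe : u1*w1 + u2*w2 = UW a k x).
  { unfold UW. rewrite Hsq, <- S12, <- EP, <- EQ. unfold s1, s2. field_simplify; [|lra].
    rewrite <- Hv. field. lra. }
  assert (UxWe : sqrt (Kc a k) * UxW a k x = s3 * (u1*w2 - u2*w1)).
  { unfold UxW. rewrite <- EP, <- EQ.
    replace (sqrt (Kc a k) * (((u1 * v1 + u2 * v2) * sqrt (Hf a x) + (v1 * w1 + v2 * w2) * sqrt (Gf a k x)) / x))
      with (((u1 * v1 + u2 * v2) * (sqrt (Hf a x) * sqrt (Kc a k)) + (v1 * w1 + v2 * w2) * (sqrt (Gf a k x) * sqrt (Kc a k))) / x)
      by (field; lra).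
    rewrite <- S13. rewrite <- S23. unfold s1, s2, s3. rewrite <- Hv. field. lra. }
  split; [auto|]. split; [auto|]. split; [auto|].
  split; [|split].
  - unfold B1. rewrite <- UWe. rewrite <- Hw. replace (k*k) with (u1*u1+u2*u2) by lra. ring.
  - unfold B3. rewrite <- UWe, UxWe. rewrite <- EZ.
    replace (k*k) with (u1*u1+u2*u2) by lra. rewrite <- Hw, <- Hz. unfold s3. field. nra.
  - unfold B5. rewrite (Rmult_comm (sqrt (Kc a k))), <- S13, <- EZ, <- EP. replace (k*k) with (u1*u1+u2*u2) by lra.
    rewrite <- Hz, <- Hv. unfold s1, s3. field. nra.
Qed.

Lemma sq_zero p q : p * p + q * q = 0 -> p = 0 /\ q = 0.
Proof.
  intros H. pose proof (Rle_0_sqr p); pose proof (Rle_0_sqr q); unfold Rsqr in *.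
  assert (p * p = 0) by lra. assert (q * q = 0) by lra.
  split; [destruct (Rmult_integral _ _ H2)|destruct (Rmult_integral _ _ H3)]; auto.
Qed.

Lemma config_int (a : nat -> R) (k x u1 u2 v1 v2 w1 w2 z1 z2 : R) :
  0 < k -> 0 < x ->
  u1*u1 + u2*u2 = k*k -> v1*v1 + v2*v2 = x ->
  w1*w1 + w2*w2 = a 2%nat * a 2%nat ->
  (w1 - v1)*(w1 - v1) + (w2 - v2)*(w2 - v2) = a 1%nat * a 1%nat ->
  z1*z1 + z2*z2 = a 3%nat * a 3%nat ->
  (u1 - z1)*(u1 - z1) + (u2 - z2)*(u2 - z2) = a 4%nat * a 4%nat ->
  (v1 - u1)*(v1 - u1) + (v2 - u2)*(v2 - u2) = a 5%nat * a 5%nat ->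
  let s1 := u1*v2 - u2*v1 in let s2 := v1*w2 - v2*w1 in let s3 := z1*u2 - z2*u1 in
  let rho := u1*w2 - u2*w1 in let zeta := z1*w2 - z2*w1 in let tau := z1*v2 - z2*v1 in
  0 <= s1 * s2 -> 0 <= s1 * s3 -> 0 <= s2 * s3 ->
  0 <= s1 * rho -> 0 <= s1 * zeta -> 0 <= s1 * tau ->
  0 < Gf a k x -> 0 < Hf a x ->
  0 <= UxW a k x /\ 0 <= Zc a k * UxW a k x + sqrt (Kc a k) * UW a k x /\
  0 <= Zc a k * sqrt (Gf a k x) + sqrt (Kc a k) * Pf a k x /\
  0 < B1 a k x /\ 0 < B3 a k x /\ 0 < B5 a k x.
Proof.
  intros Hk Hx Hu Hv Hw H1 Hz H4 H5 s1 s2 s3 rho zeta tau P12 P13 P23 Pr Pz Pt HG HH.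
  destruct (config_alg a k x u1 u2 v1 v2 w1 w2 z1 z2 Hk Hx Hu Hv Hw H1 Hz H4 H5 P12 P13 P23)
    as [G1 [G2 [G3 [EB1 [EB3 EB5]]]]].
  fold s1 s2 s3 in G1, G2, G3.
  assert (EP : u1*v1 + u2*v2 = Pf a k x) by (unfold Pf; lra).
  assert (EQ : v1*w1 + v2*w2 = Qf a x) by (unfold Qf; lra).
  assert (EZ : z1*u1 + z2*u2 = Zc a k) by (unfold Zc; lra).
  assert (S12 := sqrt_prod_eq _ _ _ _ P12 G1 G2).
  assert (S13 := sqrt_prod_eq _ _ _ _ P13 G1 G3).
  assert (SG : sqrt (Gf a k x) * sqrt (Gf a k x) = Gf a k x) by (apply sqrt_sqrt; lra).
  assert (sG : 0 < sqrt (Gf a k x)) by (apply sqrt_lt_R0; lra).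
  assert (I2 : x * rho = Pf a k x * s2 + s1 * Qf a x).
  { rewrite <- EP, <- EQ, <- Hv. unfold rho, s1, s2. ring. }
  assert (UWe : u1*w1 + u2*w2 = UW a k x).
  { destruct (config_alg a k x u1 u2 v1 v2 w1 w2 z1 z2 Hk Hx Hu Hv Hw H1 Hz H4 H5 P12 P13 P23) as [_ [_ [_ [E _]]]].
    unfold B1 in E. replace (k*k) with (u1*u1+u2*u2) in E by lra. rewrite <- Hw in E. lra. }
  assert (Rho : s1 * rho = sqrt (Gf a k x) * UxW a k x).
  { unfold UxW. apply Rmult_eq_reg_l with x; [|lra].
    replace (x * (s1 * rho)) with (s1 * (x * rho)) by ring. rewrite I2.
    replace (s1 * (Pf a k x * s2 + s1 * Qf a x)) with (Pf a k x * (s1 * s2) + (s1 * s1) * Qf a x) by ring.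
    rewrite S12, G1. set (g := sqrt (Gf a k x)) in *. rewrite <- SG. field. lra. }
  assert (UxW0 : 0 <= UxW a k x).
  { destruct (Rle_lt_dec 0 (UxW a k x)); auto. nra. }
  assert (I5 : (k*k) * zeta = Zc a k * rho + s3 * (u1*w1 + u2*w2)).
  { rewrite <- EZ. replace (k*k) with (u1*u1+u2*u2) by lra. unfold zeta, rho, s3. ring. }
  assert (Zeta : s1 * (k*k) * zeta = sqrt (Gf a k x) * (Zc a k * UxW a k x + sqrt (Kc a k) * UW a k x)).
  { rewrite Rmult_assoc, I5, UWe.
    replace (s1 * (Zc a k * rho + s3 * UW a k x)) with (Zc a k * (s1 * rho) + (s1 * s3) * UW a k x) by ring.
    rewrite Rho, S13. ring. }
  assert (ZW0 : 0 <= Zc a k * UxW a k x + sqrt (Kc a k) * UW a k x).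
  { destruct (Rle_lt_dec 0 (Zc a k * UxW a k x + sqrt (Kc a k) * UW a k x)); auto.
    assert (0 <= s1 * (k * k) * zeta) by (replace (s1 * (k*k) * zeta) with ((k*k) * (s1 * zeta)) by ring; apply Rmult_le_pos; nra).
    nra. }
  assert (I6 : (k*k) * tau = Zc a k * s1 + s3 * Pf a k x).
  { rewrite <- EZ, <- EP. replace (k*k) with (u1*u1+u2*u2) by lra. unfold tau, s1, s3. ring. }
  assert (Tau : s1 * (k*k) * tau = sqrt (Gf a k x) * (Zc a k * sqrt (Gf a k x) + sqrt (Kc a k) * Pf a k x)).
  { rewrite Rmult_assoc, I6.
    replace (s1 * (Zc a k * s1 + s3 * Pf a k x)) with (Zc a k * (s1 * s1) + (s1 * s3) * Pf a k x) by ring.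
    rewrite S13, G1. set (g := sqrt (Gf a k x)) in *. rewrite <- SG. ring. }
  assert (T0 : 0 <= Zc a k * sqrt (Gf a k x) + sqrt (Kc a k) * Pf a k x).
  { destruct (Rle_lt_dec 0 (Zc a k * sqrt (Gf a k x) + sqrt (Kc a k) * Pf a k x)); auto.
    assert (0 <= s1 * (k * k) * tau) by (replace (s1 * (k*k) * tau) with ((k*k) * (s1 * tau)) by ring; apply Rmult_le_pos; nra).
    nra. }
  split; [auto|]. split; [auto|]. split; [auto|].
  split; [|split].
  - rewrite <- EB1. destruct (Rle_lt_dec ((w1 - u1)*(w1 - u1) + (w2 - u2)*(w2 - u2)) 0) as [Hle|]; auto.
    exfalso. pose proof (Rle_0_sqr (w1 - u1)); pose proof (Rle_0_sqr (w2 - u2)); unfold Rsqr in *.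
    destruct (sq_zero (w1 - u1) (w2 - u2) ltac:(lra)).
    assert (s2 = - s1) by (unfold s1, s2; replace w1 with u1 by lra; replace w2 with u2 by lra; ring).
    rewrite H6 in P12. nra.
  - rewrite <- EB3. destruct (Rle_lt_dec ((w1 - z1)*(w1 - z1) + (w2 - z2)*(w2 - z2)) 0) as [Hle|]; auto.
    exfalso. pose proof (Rle_0_sqr (w1 - z1)); pose proof (Rle_0_sqr (w2 - z2)); unfold Rsqr in *.
    destruct (sq_zero (w1 - z1) (w2 - z2) ltac:(lra)).
    assert (Es : s2 = - tau) by (unfold tau, s2; replace w1 with z1 by lra; replace w2 with z2 by lra; ring).
    assert (Z0 : s1 * s2 = 0) by (rewrite Es in *; nra).
    assert (Z1 : (s1 * s2) * (s1 * s2) = Gf a k x * Hf a x) by (rewrite <- G1, <- G2; ring).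
    rewrite Z0 in Z1. nra.
  - rewrite <- EB5. destruct (Rle_lt_dec ((z1 - v1)*(z1 - v1) + (z2 - v2)*(z2 - v2)) 0) as [Hle|]; auto.
    exfalso. pose proof (Rle_0_sqr (z1 - v1)); pose proof (Rle_0_sqr (z2 - v2)); unfold Rsqr in *.
    destruct (sq_zero (z1 - v1) (z2 - v2) ltac:(lra)).
    assert (s3 = - s1) by (unfold s1, s3; replace z1 with v1 by lra; replace z2 with v2 by lra; ring).
    rewrite H6 in P13. nra.
Qed.


Ltac nzt := repeat match goal with
  | |- _ /\ _ => split
  | |- True => exact I
  | |- ?x <> 0 => apply Rgt_not_eq; nra
  | |- _ => nra
  end.

Definition ee (a : nat -> R) k := k * k - a 5%nat * a 5%nat.
Definition cc (a : nat -> R) := a 2%nat * a 2%nat - a 1%nat * a 1%nat.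
Definition pf a k u := Pf a k u * Qf a u / u.
Definition gq a k u := Gf a k u / u.
Definition hq a u := Hf a u / u.

Lemma ball_pos t u : 0 < t -> Rabs (u - t) < t -> 0 < u.
Proof. intros Ht H. apply Rabs_def2 in H. lra. Qed.

Lemma D2_pf a k t : 0 < t ->
  D2 (pf a k) (fun u => / 4 - ee a k * cc a / (4 * u * u)) (fun u => ee a k * cc a / (2 * u * u * u)) t.
Proof.
  intros Ht. exists t; split; auto. intros u Hu. pose proof (ball_pos t u Ht Hu).
  unfold pf, Pf, Qf, ee, cc. split.
  - auto_derive; [lra|]. field. lra.
  - auto_derive; [nzt|]. field. lra.
Qed.

Lemma D2_gq a k t : 0 < t ->
  D2 (gq a k) (fun u => - / 4 + ee a k * ee a k / (4 * u * u)) (fun u => - (ee a k * ee a k) / (2 * u * u * u)) t.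
Proof.
  intros Ht. exists t; split; auto. intros u Hu. pose proof (ball_pos t u Ht Hu).
  unfold gq, Gf, Pf, ee. split.
  - auto_derive; [lra|]. field. lra.
  - auto_derive; [nzt|]. field. lra.
Qed.

Lemma D2_hq a t : 0 < t ->
  D2 (hq a) (fun u => - / 4 + cc a * cc a / (4 * u * u)) (fun u => - (cc a * cc a) / (2 * u * u * u)) t.
Proof.
  intros Ht. exists t; split; auto. intros u Hu. pose proof (ball_pos t u Ht Hu).
  unfold hq, Hf, Qf, cc. split.
  - auto_derive; [lra|]. field. lra.
  - auto_derive; [nzt|]. field. lra.
Qed.

Definition nearP (P : R -> Prop) (t : R) := exists d, 0 < d /\ forall u, Rabs (u - t) < d -> P u.

Lemma nearP_and P Q t : nearP P t -> nearP Q t -> nearP (fun u => P u /\ Q u) t.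
Proof.
  intros [d [Hd H]] [e [He G]]. exists (Rmin d e); split; [apply Rmin_pos; auto|].
  intros u Hu. pose proof (Rmin_l d e); pose proof (Rmin_r d e). split; [apply H|apply G]; lra.
Qed.

Lemma nearP_imp (P Q : R -> Prop) t : (forall u, P u -> Q u) -> nearP P t -> nearP Q t.
Proof. intros HPQ [d [Hd H]]. exists d; split; auto. Qed.

Lemma D2_sqrt f f1 f2 t : D2 f f1 f2 t -> nearP (fun u => 0 < f u) t ->
  D2 (fun u => sqrt (f u)) (fun u => / (2 * sqrt (f u)) * f1 u)
     (fun u => - / (4 * f u * sqrt (f u)) * f1 u * f1 u + / (2 * sqrt (f u)) * f2 u) t.
Proof.
  intros HD HP. apply (D2_comp sqrt (fun y => / (2 * sqrt y)) (fun y => - / (4 * y * sqrt y)) (fun y => 0 < y)); auto.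
  intros y Hy. apply sqrt_d2; auto.
Qed.

Lemma D2_invsqrt f f1 f2 t : D2 f f1 f2 t -> nearP (fun u => 0 < f u) t ->
  D2 (fun u => / sqrt (f u)) (fun u => - / (2 * f u * sqrt (f u)) * f1 u)
     (fun u => 3 / (4 * f u * f u * sqrt (f u)) * f1 u * f1 u + - / (2 * f u * sqrt (f u)) * f2 u) t.
Proof.
  intros HD HP. apply (D2_comp (fun z => / sqrt z) (fun y => - / (2 * y * sqrt y)) (fun y => 3 / (4 * y * y * sqrt y)) (fun y => 0 < y)); auto.
  intros y Hy. apply invsqrt_d2; auto.
Qed.

Lemma key_ineq (e c t g h g1 h1 : R) : 0 < t -> 0 < g -> 0 < h ->
  0 <= e * c / (2 * t * t * t) + (-1) * (- / (4 * (g * h) * sqrt (g * h)) * (g1 * h + g * h1) * (g1 * h + g * h1)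
        + / (2 * sqrt (g * h)) * (- (e * e) / (2 * t * t * t) * h + g1 * h1 + (g1 * h1 + g * (- (c * c) / (2 * t * t * t))))).
Proof.
  intros Ht Hg Hh.
  pose proof (sqrt_lt_R0 g Hg) as Psg. pose proof (sqrt_lt_R0 h Hh) as Psh.
  pose proof (sqrt_sqrt g (Rlt_le _ _ Hg)) as Sg. pose proof (sqrt_sqrt h (Rlt_le _ _ Hh)) as Sh.
  rewrite sqrt_mult by lra.
  set (sg := sqrt g) in *. set (sh := sqrt h) in *.
  rewrite <- Sg, <- Sh.
  match goal with |- 0 <= ?X =>
    replace X with (((g1 * sh * sh - sg * sg * h1) * (g1 * sh * sh - sg * sg * h1) * (t*t*t)
       + sg * sg * sh * sh * (e * sh + c * sg) * (e * sh + c * sg)) / (4 * sg * sg * sg * sh * sh * sh * (t*t*t)))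
  end.
  - apply Rdiv_le_0_compat.
    + apply Rplus_le_le_0_compat.
      * apply Rmult_le_pos; [apply Rle_0_sqr| nra].
      * assert (0 <= (e * sh + c * sg) * (e * sh + c * sg)) by apply Rle_0_sqr.
        assert (0 <= sg * sg * sh * sh) by (apply Rmult_le_pos; [apply Rmult_le_pos|]; nra).
        nra.
    + assert (0 < t * t * t) by (apply Rmult_lt_0_compat; nra).
      assert (0 < sg * sg * sg * sh * sh * sh) by (repeat apply Rmult_lt_0_compat; auto).
      nra.
  - field. repeat split; nra.
Qed.

Lemma nearP_pos t : 0 < t -> nearP (fun u => 0 < u) t.
Proof. intros Ht. exists t; split; auto. intros u Hu. apply (ball_pos t u Ht Hu). Qed.

Lemma D2_UW a k t : 0 < t -> nearP (fun u => 0 < Gf a k u /\ 0 < Hf a u) t ->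
  exists U1 U2, D2 (UW a k) U1 U2 t /\ 0 <= U2 t.
Proof.
  intros Ht HN.
  pose proof (D2_mult _ _ _ _ _ _ t (D2_gq a k t Ht) (D2_hq a t Ht)) as HF.
  assert (HP : nearP (fun u => 0 < gq a k u * hq a u) t).
  { eapply nearP_imp; [|apply (nearP_and _ _ t (nearP_pos t Ht) HN)].
    intros u [Hu [HG HH]]. unfold gq, hq. apply Rmult_lt_0_compat; apply Rdiv_lt_0_compat; auto. }
  pose proof (D2_sqrt _ _ _ t HF HP) as HS.
  pose proof (D2_plus _ _ _ _ _ _ t (D2_pf a k t Ht) (D2_scal (-1) _ _ _ t HS)) as HU.
  eexists; eexists; split.
  - refine (D2_ext _ (UW a k) _ _ t 1 _ _ HU); [lra|].
    intros u _. unfold UW, pf, gq, hq. ring.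
  - cbv beta. apply key_ineq; auto.
    + destruct HN as [d [Hd HN]]. destruct (HN t) as [HG _]; [rewrite Rminus_diag, Rabs_R0; lra|].
      unfold gq; apply Rdiv_lt_0_compat; auto.
    + destruct HN as [d [Hd HN]]. destruct (HN t) as [_ HH]; [rewrite Rminus_diag, Rabs_R0; lra|].
      unfold hq; apply Rdiv_lt_0_compat; auto.
Qed.



Lemma nearP_t P t : nearP P t -> P t.
Proof. intros [d [Hd H]]. apply H. rewrite Rminus_diag, Rabs_R0; lra. Qed.

Lemma D2_B1 a k t : 0 < t -> nearP (fun u => 0 < Gf a k u /\ 0 < Hf a u) t ->
  exists f1 f2, D2 (B1 a k) f1 f2 t /\ f2 t <= 0.
Proof.
  intros Ht HN. destruct (D2_UW a k t Ht HN) as [U1 [U2 [HU HU2]]].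
  pose proof (D2_plus _ _ _ _ _ _ t (D2_const (a 2%nat * a 2%nat + k * k) t) (D2_scal (-2) _ _ _ t HU)) as H.
  eexists; eexists; split.
  - refine (D2_ext _ (B1 a k) _ _ t 1 _ _ H); [lra|]. intros u _. unfold B1. ring.
  - cbv beta. lra.
Qed.

Lemma D2_Gf a k t : D2 (Gf a k) (fun u => k * k - (u + ee a k) / 2) (fun _ => - / 2) t.
Proof.
  exists 1; split; [lra|]. intros u _. unfold Gf, Pf, ee. split.
  - auto_derive; auto. field.
  - auto_derive; auto. field.
Qed.

Lemma D2_B5 a k t : 0 < k -> nearP (fun u => 0 < Gf a k u) t ->
  exists f1 f2, D2 (B5 a k) f1 f2 t /\ f2 t <= 0.
Proof.
  intros Hk HN.
  pose proof (D2_sqrt _ _ _ t (D2_Gf a k t) HN) as HS.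
  assert (HL : D2 (fun u => a 3%nat * a 3%nat + u - Zc a k * (k * k + u - a 5%nat * a 5%nat) / (k * k))
                  (fun _ => 1 - Zc a k / (k * k)) (fun _ => 0) t).
  { exists 1; split; [lra|]. intros u _. split.
    - auto_derive; [nzt|]. field. nzt.
    - auto_derive; auto. }
  pose proof (D2_plus _ _ _ _ _ _ t HL (D2_scal (2 * sqrt (Kc a k) / (k * k)) _ _ _ t HS)) as H.
  eexists; eexists; split.
  - refine (D2_ext _ (B5 a k) _ _ t 1 _ _ H); [lra|]. intros u _. unfold B5, Pf. field. nzt.
  - cbv beta. pose proof (nearP_t _ _ HN) as HG. simpl in HG.
    pose proof (sqrt_lt_R0 _ HG). pose proof (sqrt_pos (Kc a k)).
    assert (0 <= 2 * sqrt (Kc a k) / (k * k)) by (apply Rdiv_le_0_compat; nra).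
    assert (- / (4 * Gf a k t * sqrt (Gf a k t)) * (t * 0 + 1 * 1 - (t + ee a k) / 2) * 0 = 0) by ring.
    set (G1 := k * k - (t + ee a k) / 2).
    assert (0 < / (4 * Gf a k t * sqrt (Gf a k t))) by (apply Rinv_0_lt_compat; nra).
    assert (0 < / (2 * sqrt (Gf a k t))) by (apply Rinv_0_lt_compat; nra).
    assert (- / (4 * Gf a k t * sqrt (Gf a k t)) * G1 * G1 + / (2 * sqrt (Gf a k t)) * - / 2 <= 0).
    { assert (0 <= G1 * G1) by apply Rle_0_sqr. nra. }
    nra.
Qed.

Lemma UW_alt a k u : 0 < u -> 0 <= Gf a k u -> 0 <= Hf a u ->
  UW a k u = (Pf a k u * Qf a u - sqrt (Gf a k u) * sqrt (Hf a u)) / u.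
Proof.
  intros Hu HG HH. unfold UW.
  replace (Gf a k u / u * (Hf a u / u)) with ((Gf a k u * Hf a u) / (u * u)) by (field; lra).
  rewrite sqrt_div_alt by nra. rewrite sqrt_square by lra. rewrite sqrt_mult by auto. field. lra.
Qed.

Lemma uw_id a k u : 0 < u -> 0 <= Gf a k u -> 0 <= Hf a u ->
  UW a k u * UW a k u + UxW a k u * UxW a k u = k * k * (a 2%nat * a 2%nat).
Proof.
  intros Hu HG HH. rewrite UW_alt by auto. unfold UxW.
  pose proof (sqrt_sqrt _ HG) as SG. pose proof (sqrt_sqrt _ HH) as SH.
  set (sg := sqrt (Gf a k u)) in *. set (sh := sqrt (Hf a u)) in *.
  assert (E1 : Pf a k u * Pf a k u + sg * sg = k * k * u) by (rewrite SG; unfold Gf; ring).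
  assert (E2 : Qf a u * Qf a u + sh * sh = a 2%nat * a 2%nat * u) by (rewrite SH; unfold Hf; ring).
  apply Rmult_eq_reg_r with (u * u); [|nra].
  replace (((Pf a k u * Qf a u - sg * sh) / u * ((Pf a k u * Qf a u - sg * sh) / u) +
    (Pf a k u * sh + Qf a u * sg) / u * ((Pf a k u * sh + Qf a u * sg) / u)) * (u * u))
   with ((Pf a k u * Pf a k u + sg * sg) * (Qf a u * Qf a u + sh * sh)) by (field; lra).
  rewrite E1, E2. ring.
Qed.

Lemma uxw_zero a k u : 0 < u -> 0 < Gf a k u -> 0 < Hf a u -> 0 < a 2%nat ->
  UxW a k u = 0 -> UW a k u < 0.
Proof.
  intros Hu HG HH Ha2 H0. rewrite UW_alt by lra. unfold UxW in H0.
  pose proof (sqrt_sqrt _ (Rlt_le _ _ HG)) as SG. pose proof (sqrt_sqrt _ (Rlt_le _ _ HH)) as SH.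
  pose proof (sqrt_lt_R0 _ HG). pose proof (sqrt_lt_R0 _ HH).
  set (sg := sqrt (Gf a k u)) in *. set (sh := sqrt (Hf a u)) in *.
  assert (E0 : Pf a k u * sh + Qf a u * sg = 0).
  { apply Rmult_eq_reg_r with (/ u); [|apply Rinv_neq_0_compat; lra]. rewrite Rmult_0_l. exact H0. }
  assert (E2 : Qf a u * Qf a u + sh * sh = a 2%nat * a 2%nat * u) by (rewrite SH; unfold Hf; ring).
  assert (K : sh * (Pf a k u * Qf a u - sg * sh) = - sg * (a 2%nat * a 2%nat * u)).
  { rewrite <- E2. replace (sh * (Pf a k u * Qf a u - sg * sh)) with (Qf a u * (Pf a k u * sh) - sg * (sh * sh)) by ring.
    replace (Pf a k u * sh) with (- (Qf a u * sg)) by lra. ring. }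
  assert (0 < a 2%nat * a 2%nat * u) by (apply Rmult_lt_0_compat; nra).
  assert (Pf a k u * Qf a u - sg * sh < 0) by nra.
  apply Rmult_lt_reg_r with u; auto. unfold Rdiv. rewrite Rmult_assoc, Rinv_l by lra. lra.
Qed.

Definition R2 (a : nat -> R) k := k * k * (a 2%nat * a 2%nat).
Definition Psi a k w := a 2%nat * a 2%nat + a 3%nat * a 3%nat -
  2 * (Zc a k * w - sqrt (Kc a k) * sqrt (R2 a k - w * w)) / (k * k).
Definition Psi1 a k w := -2 * (Zc a k + sqrt (Kc a k) * w / sqrt (R2 a k - w * w)) / (k * k).
Definition Psi2 a k w := -2 * sqrt (Kc a k) * R2 a k / (k * k * (R2 a k - w * w) * sqrt (R2 a k - w * w)).

Lemma Psi_d2 a k w : 0 < k -> w * w < R2 a k ->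
  is_derive (Psi a k) w (Psi1 a k w) /\ is_derive (Psi1 a k) w (Psi2 a k w).
Proof.
  intros Hk Hw. assert (HR : 0 < R2 a k - w * w) by lra.
  pose proof (sqrt_lt_R0 _ HR) as Hs. pose proof (sqrt_sqrt _ (Rlt_le _ _ HR)) as Ss.
  unfold Psi, Psi1, Psi2. split.
  - auto_derive; replace (R2 a k + - (w * w)) with (R2 a k - w * w) by ring; [nzt|]. field. nzt.
  - auto_derive; replace (R2 a k + - (w * w)) with (R2 a k - w * w) by ring; [nzt|].
    remember (sqrt (R2 a k - w * w)) as s.
    replace (R2 a k) with (s * s + w * w) by lra. field. nzt.
Qed.

Lemma D2_B3 a k t : 0 < k -> 0 < t -> 0 < a 2%nat ->
  nearP (fun u => 0 < Gf a k u /\ 0 < Hf a u /\ 0 <= UxW a k u /\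
    0 <= Zc a k * UxW a k u + sqrt (Kc a k) * UW a k u /\
    0 <= Zc a k * sqrt (Gf a k u) + sqrt (Kc a k) * Pf a k u) t ->
  exists f1 f2, D2 (B3 a k) f1 f2 t /\ f2 t <= 0.
Proof.
  intros Hk Ht Ha2 HN.
  assert (HN2 : nearP (fun u => 0 < Gf a k u /\ 0 < Hf a u) t).
  { eapply nearP_imp; [|exact HN]. intros u [? [? _]]; auto. }
  destruct (D2_UW a k t Ht HN2) as [U1 [U2 [HU HU2]]].
  pose proof (nearP_t _ _ HN) as [HGt [HHt [HXt [HZt HTt]]]].
  destruct (Rle_lt_or_eq_dec 0 (sqrt (Kc a k)) (sqrt_pos _)) as [HK|HK].
  -
    assert (HN3 : nearP (fun u => 0 < UxW a k u /\ UW a k u * UW a k u < R2 a k /\ 0 < u) t).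
    { eapply nearP_imp; [|exact (nearP_and _ _ t HN (nearP_pos t Ht))].
      intros u [[HG [HH [HX [HZ _]]]] Hu].
      assert (HX' : 0 < UxW a k u).
      { destruct (Rle_lt_or_eq_dec _ _ HX) as [|E]; auto. exfalso.
        pose proof (uxw_zero a k u Hu HG HH Ha2 (eq_sym E)). rewrite <- E in HZ. nra. }
      split; auto. split; auto. pose proof (uw_id a k u Hu (Rlt_le _ _ HG) (Rlt_le _ _ HH)).
      unfold R2. nra. }
    pose proof (D2_comp (Psi a k) (Psi1 a k) (Psi2 a k) (fun w => w * w < R2 a k) _ _ _ t
       (fun w Hw => Psi_d2 a k w Hk Hw) HU) as HC.
    assert (HD : nearP (fun u => UW a k u * UW a k u < R2 a k) t).
    { eapply nearP_imp; [|exact HN3]. intros u [_ [? _]]; auto. }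
    specialize (HC HD).
    destruct HN3 as [d3 [Hd3 HN3']].
    destruct HN as [d0 [Hd0 HN0]].
    eexists; eexists; split.
    + refine (D2_ext _ (B3 a k) _ _ t (Rmin d3 d0) _ _ HC); [apply Rmin_pos; auto|].
      intros u Hu. pose proof (Rmin_l d3 d0); pose proof (Rmin_r d3 d0).
      destruct (HN3' u ltac:(lra)) as [HX [HW Hu0]]. destruct (HN0 u ltac:(lra)) as [HG [HH _]].
      unfold Psi, B3. f_equal. f_equal. f_equal. f_equal.
      pose proof (uw_id a k u Hu0 (Rlt_le _ _ HG) (Rlt_le _ _ HH)).
      replace (R2 a k - UW a k u * UW a k u) with (UxW a k u * UxW a k u) by (unfold R2; lra).
      rewrite sqrt_square; lra.
    + cbv beta. 
      destruct (nearP_t _ _ (ex_intro _ d3 (conj Hd3 HN3'))) as [HXt' [HWt _]].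
      assert (HV : sqrt (R2 a k - UW a k t * UW a k t) = UxW a k t).
      { pose proof (uw_id a k t Ht (Rlt_le _ _ HGt) (Rlt_le _ _ HHt)).
        replace (R2 a k - UW a k t * UW a k t) with (UxW a k t * UxW a k t) by (unfold R2; lra).
        rewrite sqrt_square; lra. }
      unfold Psi1, Psi2. rewrite HV.
      assert (HRw : R2 a k - UW a k t * UW a k t = UxW a k t * UxW a k t).
      { pose proof (uw_id a k t Ht (Rlt_le _ _ HGt) (Rlt_le _ _ HHt)). unfold R2 in *; lra. }
      rewrite HRw.
      assert (P2 : -2 * sqrt (Kc a k) * R2 a k / (k * k * (UxW a k t * UxW a k t) * UxW a k t) <= 0).
      { assert (0 < R2 a k) by (unfold R2; apply Rmult_lt_0_compat; nra).
        assert (0 < k * k * (UxW a k t * UxW a k t) * UxW a k t) by (apply Rmult_lt_0_compat; [apply Rmult_lt_0_compat|]; nra).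
        unfold Rdiv. assert (0 < / (k * k * (UxW a k t * UxW a k t) * UxW a k t)) by (apply Rinv_0_lt_compat; auto).
        assert (0 <= sqrt (Kc a k) * R2 a k * / (k * k * (UxW a k t * UxW a k t) * UxW a k t)).
        { apply Rmult_le_pos; [apply Rmult_le_pos|]; lra. }
        lra. }
      assert (P1 : -2 * (Zc a k + sqrt (Kc a k) * UW a k t / UxW a k t) / (k * k) <= 0).
      { assert (Hkk : 0 < k * k) by nra.
        assert (Hkx : 0 < k * k * UxW a k t) by (apply Rmult_lt_0_compat; lra).
        replace (-2 * (Zc a k + sqrt (Kc a k) * UW a k t / UxW a k t) / (k * k))
          with (-2 * (Zc a k * UxW a k t + sqrt (Kc a k) * UW a k t) / (k * k * UxW a k t))
          by (field; split; apply Rgt_not_eq; lra).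
        unfold Rdiv. assert (0 < / (k * k * UxW a k t)) by (apply Rinv_0_lt_compat; lra).
        assert (0 <= (Zc a k * UxW a k t + sqrt (Kc a k) * UW a k t) * / (k * k * UxW a k t)) by (apply Rmult_le_pos; lra).
        lra. }
      assert (0 <= U1 t * U1 t) by apply Rle_0_sqr.
      nra.
  -
    assert (HZc : 0 <= Zc a k).
    { rewrite <- HK in HTt. pose proof (sqrt_lt_R0 _ HGt). nra. }
    pose proof (D2_plus _ _ _ _ _ _ t (D2_const (a 2%nat * a 2%nat + a 3%nat * a 3%nat) t)
        (D2_scal (-2 * Zc a k / (k * k)) _ _ _ t HU)) as H.
    eexists; eexists; split.
    + refine (D2_ext _ (B3 a k) _ _ t 1 _ _ H); [lra|]. intros u _. unfold B3. rewrite <- HK. field. nzt.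
    + cbv beta. assert (0 <= 2 * Zc a k / (k * k)) by (apply Rdiv_le_0_compat; nra). nra.
Qed.


Lemma term_ge c B t : 0 <= c -> (exists f1 f2, D2 B f1 f2 t /\ f2 t <= 0) -> nearP (fun u => 0 < B u) t ->
  exists g1 g2, D2 (fun u => c / sqrt (B u)) g1 g2 t /\ 0 <= g2 t.
Proof.
  intros Hc [f1 [f2 [HD Hf2]]] HP.
  pose proof (D2_scal c _ _ _ t (D2_invsqrt _ _ _ t HD HP)) as H.
  eexists; eexists; split.
  - refine (D2_ext _ _ _ _ t 1 _ _ H); [lra|]. intros u _. unfold Rdiv. reflexivity.
  - cbv beta. pose proof (nearP_t _ _ HP) as Hb. simpl in Hb.
    pose proof (sqrt_lt_R0 _ Hb).
    assert (0 <= 3 / (4 * B t * B t * sqrt (B t))) by (apply Rdiv_le_0_compat; [lra|]; apply Rmult_lt_0_compat; [|auto]; nra).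
    assert (0 < / (2 * B t * sqrt (B t))) by (apply Rinv_0_lt_compat; apply Rmult_lt_0_compat; nra).
    assert (0 <= f1 t * f1 t) by apply Rle_0_sqr.
    assert (0 <= 3 / (4 * B t * B t * sqrt (B t)) * f1 t * f1 t).
    { rewrite Rmult_assoc. apply Rmult_le_pos; auto. }
    assert (0 <= - / (2 * B t * sqrt (B t)) * f2 t) by nra.
    apply Rmult_le_pos; lra.
Qed.

Lemma term_id c t : 0 < c -> 0 < t ->
  exists g1 g2, D2 (fun u => c / sqrt u) g1 g2 t /\ 0 < g2 t.
Proof.
  intros Hc Ht.
  pose proof (D2_scal c _ _ _ t (D2_invsqrt _ _ _ t (D2_id t) (nearP_pos t Ht))) as H.
  eexists; eexists; split.
  - refine (D2_ext _ _ _ _ t 1 _ _ H); [lra|]. intros u _. unfold Rdiv. reflexivity.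
  - cbv beta. pose proof (sqrt_lt_R0 _ Ht).
    assert (0 < 3 / (4 * t * t * sqrt t)) by (apply Rdiv_lt_0_compat; [lra|]; apply Rmult_lt_0_compat; [|auto]; nra).
    replace (3 / (4 * t * t * sqrt t) * 1 * 1 + - / (2 * t * sqrt t) * 0) with (3 / (4 * t * t * sqrt t)) by ring.
    apply Rmult_lt_0_compat; auto.
Qed.

Lemma sum_ge F G t : (exists f1 f2, D2 F f1 f2 t /\ 0 <= f2 t) -> (exists g1 g2, D2 G g1 g2 t /\ 0 <= g2 t) ->
  exists h1 h2, D2 (fun u => F u + G u) h1 h2 t /\ 0 <= h2 t.
Proof.
  intros [f1 [f2 [HF HF2]]] [g1 [g2 [HG HG2]]].
  exists (fun u => f1 u + g1 u), (fun u => f2 u + g2 u). split; [apply D2_plus; auto|]. lra.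
Qed.

Lemma sum_gt F G t : (exists f1 f2, D2 F f1 f2 t /\ 0 < f2 t) -> (exists g1 g2, D2 G g1 g2 t /\ 0 <= g2 t) ->
  exists h1 h2, D2 (fun u => F u + G u) h1 h2 t /\ 0 < h2 t.
Proof.
  intros [f1 [f2 [HF HF2]]] [g1 [g2 [HG HG2]]].
  exists (fun u => f1 u + g1 u), (fun u => f2 u + g2 u). split; [apply D2_plus; auto|]. lra.
Qed.

Definition Ftot (a q : nat -> R) k u :=
  q 2%nat * q 5%nat / sqrt (B1 a k u) + q 1%nat * q 3%nat / sqrt u
  + q 2%nat * q 4%nat / sqrt (B3 a k u) + q 3%nat * q 5%nat / k
  + q 1%nat * q 4%nat / sqrt (B5 a k u).

Definition Good a k u := 0 < u /\ 0 < Gf a k u /\ 0 < Hf a u /\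
  0 < B1 a k u /\ 0 < B3 a k u /\ 0 < B5 a k u /\ 0 <= UxW a k u /\
  0 <= Zc a k * UxW a k u + sqrt (Kc a k) * UW a k u /\
  0 <= Zc a k * sqrt (Gf a k u) + sqrt (Kc a k) * Pf a k u.

Lemma analysis (a q : nat -> R) k t : 0 < k ->
  (forall i, (1 <= i <= 5)%nat -> 0 < a i) ->
  (forall i, (1 <= i <= 5)%nat -> 0 < q i) ->
  nearP (Good a k) t ->
  (exists d, 0 < d /\ forall u, Rabs (u - t) < d -> ex_derive (Ftot a q k) u) /\
  ex_derive_n (Ftot a q k) 2 t /\ 0 < Derive_n (Ftot a q k) 2 t.
Proof.
  intros Hk Ha Hq HN.
  pose proof (nearP_t _ _ HN) as [Ht _].
  assert (Hq' : forall i j, (1 <= i <= 5)%nat -> (1 <= j <= 5)%nat -> 0 < q i * q j).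
  { intros i j Hi Hj. apply Rmult_lt_0_compat; auto. }
  assert (HGH : nearP (fun u => 0 < Gf a k u /\ 0 < Hf a u) t).
  { eapply nearP_imp; [|exact HN]. intros u (? & ? & ? & _); auto. }
  assert (T1 := term_ge (q 2%nat * q 5%nat) (B1 a k) t ltac:(left; apply Hq'; lia) (D2_B1 a k t Ht HGH)
     (nearP_imp _ _ t (fun u H => proj1 (proj2 (proj2 (proj2 H)))) HN)).
  assert (T2 := term_id (q 1%nat * q 3%nat) t ltac:(apply Hq'; lia) Ht).
  assert (T3 := term_ge (q 2%nat * q 4%nat) (B3 a k) t ltac:(left; apply Hq'; lia)
     (D2_B3 a k t Hk Ht ltac:(apply Ha; lia)
        (nearP_imp _ _ t (fun u H => match H with conj _ (conj HG (conj HH (conj _ (conj _ (conj _ R)))) ) => conj HG (conj HH R) end) HN))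
     (nearP_imp _ _ t (fun u H => proj1 (proj2 (proj2 (proj2 (proj2 H))))) HN)).
  assert (T4 : exists g1 g2, D2 (fun _ : R => q 3%nat * q 5%nat / k) g1 g2 t /\ 0 <= g2 t).
  { exists (fun _ => 0), (fun _ => 0). split; [apply D2_const|lra]. }
  assert (HG0 : nearP (fun u => 0 < Gf a k u) t).
  { eapply nearP_imp; [|exact HN]. intros u (? & ? & _); auto. }
  assert (T5 := term_ge (q 1%nat * q 4%nat) (B5 a k) t ltac:(left; apply Hq'; lia) (D2_B5 a k t Hk HG0)
     (nearP_imp _ _ t (fun u H => proj1 (proj2 (proj2 (proj2 (proj2 (proj2 H)))))) HN)).
  assert (S12 : exists h1 h2, D2 (fun u => q 2%nat * q 5%nat / sqrt (B1 a k u) + q 1%nat * q 3%nat / sqrt u) h1 h2 t /\ 0 < h2 t).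
  { destruct T1 as [f1 [f2 [HF HF2]]]; destruct T2 as [g1 [g2 [HG HG2]]].
    exists (fun u => f1 u + g1 u), (fun u => f2 u + g2 u). split; [apply D2_plus; auto|]. lra. }
  destruct (sum_gt _ _ t (sum_gt _ _ t (sum_gt _ _ t S12 T3) T4) T5) as [h1 [h2 [HD Hh2]]].
  assert (HD' : D2 (Ftot a q k) h1 h2 t).
  { refine (D2_ext _ _ _ _ t 1 _ _ HD); [lra|]. intros u _. unfold Ftot. reflexivity. }
  destruct (D2_final _ _ _ _ HD') as [E1 [E2 E3]].
  split; auto. split; auto. rewrite E3. auto.
Qed.


Lemma dist_sq_eq P Q r : dist P Q = r -> dist2 P Q = r * r.
Proof. intros H. rewrite <- H. rewrite dist_sq. reflexivity. Qed.

Lemma b_sq A i : b A i * b A i = dist2 (pt A (i + 4)) (pt A (S i)).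
Proof. unfold b. apply dist_sq. Qed.

Lemma facts a A : has_sides a A ->
  let u1 := fst (A 0%nat) - fst (A 3%nat) in let u2 := snd (A 0%nat) - snd (A 3%nat) in
  let v1 := fst (A 1%nat) - fst (A 3%nat) in let v2 := snd (A 1%nat) - snd (A 3%nat) in
  let w1 := fst (A 2%nat) - fst (A 3%nat) in let w2 := snd (A 2%nat) - snd (A 3%nat) in
  let z1 := fst (A 4%nat) - fst (A 3%nat) in let z2 := snd (A 4%nat) - snd (A 3%nat) in
  u1*u1+u2*u2 = b A 4 * b A 4 /\ v1*v1+v2*v2 = x A 2 /\
  w1*w1 + w2*w2 = a 2%nat * a 2%nat /\
  (w1 - v1)*(w1 - v1) + (w2 - v2)*(w2 - v2) = a 1%nat * a 1%nat /\
  z1*z1 + z2*z2 = a 3%nat * a 3%nat /\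
  (u1 - z1)*(u1 - z1) + (u2 - z2)*(u2 - z2) = a 4%nat * a 4%nat /\
  (v1 - u1)*(v1 - u1) + (v2 - u2)*(v2 - u2) = a 5%nat * a 5%nat /\
  b A 1 * b A 1 = (w1 - u1)*(w1 - u1) + (w2 - u2)*(w2 - u2) /\
  b A 3 * b A 3 = (w1 - z1)*(w1 - z1) + (w2 - z2)*(w2 - z2) /\
  b A 5 * b A 5 = (z1 - v1)*(z1 - v1) + (z2 - v2)*(z2 - v2) /\
  E A 5 3 = u1*v2 - u2*v1 /\ E A 1 3 = v1*w2 - v2*w1 /\ E A 3 5 = z1*u2 - z2*u1 /\
  E A 2 5 = u1*w2 - u2*w1 /\ E A 2 4 = z1*w2 - z2*w1 /\ E A 3 1 = z1*v2 - z2*v1.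
Proof.
  intros Hs.
  pose proof (dist_sq_eq _ _ _ (Hs 1%nat ltac:(lia))) as S1.
  pose proof (dist_sq_eq _ _ _ (Hs 2%nat ltac:(lia))) as S2.
  pose proof (dist_sq_eq _ _ _ (Hs 3%nat ltac:(lia))) as S3.
  pose proof (dist_sq_eq _ _ _ (Hs 4%nat ltac:(lia))) as S4.
  pose proof (dist_sq_eq _ _ _ (Hs 5%nat ltac:(lia))) as S5.
  pose proof (b_sq A 1) as B1. pose proof (b_sq A 3) as B3. pose proof (b_sq A 4) as B4.
  pose proof (b_sq A 5) as B5.
  pose proof (b_sq A 2) as B2.
  unfold x, Rsqr. rewrite B1, B2, B3, B4, B5.
  unfold E, cross, pt, dist2, Rsqr in *. simpl in *.
  intros.
  repeat split; try nra; try ring.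
Qed.

Lemma config_GH (a : nat -> R) (k x u1 u2 v1 v2 w1 w2 z1 z2 : R) :
  u1*u1 + u2*u2 = k*k -> v1*v1 + v2*v2 = x ->
  w1*w1 + w2*w2 = a 2%nat * a 2%nat ->
  (w1 - v1)*(w1 - v1) + (w2 - v2)*(w2 - v2) = a 1%nat * a 1%nat ->
  (v1 - u1)*(v1 - u1) + (v2 - u2)*(v2 - u2) = a 5%nat * a 5%nat ->
  0 <= Gf a k x /\ 0 <= Hf a x.
Proof.
  intros Hu Hv Hw H1 H5.
  assert (EP : u1*v1 + u2*v2 = Pf a k x) by (unfold Pf; lra).
  assert (EQ : v1*w1 + v2*w2 = Qf a x) by (unfold Qf; lra).
  split.
  - replace (Gf a k x) with ((u1*v2 - u2*v1) * (u1*v2 - u2*v1)).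
    + apply Rle_0_sqr.
    + unfold Gf. rewrite <- EP, <- Hv. replace (k*k) with (u1*u1+u2*u2) by lra. ring.
  - replace (Hf a x) with ((v1*w2 - v2*w1) * (v1*w2 - v2*w1)).
    + apply Rle_0_sqr.
    + unfold Hf. rewrite <- EQ, <- Hv, <- Hw. ring.
Qed.



Lemma b_ge0 A i : 0 <= b A i.
Proof. unfold b. apply dist_ge0. Qed.

Lemma sqrt_of_sq r s : 0 <= r -> r * r = s -> r = sqrt s.
Proof. intros Hr <-. rewrite sqrt_square; auto. Qed.

Lemma energy_pos a q k A : 0 < k -> (forall i, (1 <= i <= 5)%nat -> 0 < a i) ->
  in_slice a k A -> 0 < x A 2 -> energy q A = Ftot a q k (x A 2).
Proof.
  intros Hk Ha [HC Hb4] Hx. pose proof HC as [Hs _].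
  pose proof (facts a A Hs) as F. cbv zeta in F.
  destruct F as (Hu & Hv & Hw & H1 & Hz & H4 & H5 & Eb1 & Eb3 & Eb5 & E53 & E13 & E35 & E25 & E24 & E31).
  rewrite Hb4 in Hu.
  assert (P12 := closure_prod a A 5 3 1 3 ltac:(valid_tac) ltac:(valid_tac) HC).
  assert (P13 := closure_prod a A 5 3 3 5 ltac:(valid_tac) ltac:(valid_tac) HC).
  assert (P23 := closure_prod a A 1 3 3 5 ltac:(valid_tac) ltac:(valid_tac) HC).
  rewrite E53, E13 in P12. rewrite E53, E35 in P13. rewrite E13, E35 in P23.
  destruct (config_alg a k (x A 2) _ _ _ _ _ _ _ _ Hk Hx Hu Hv Hw H1 Hz H4 H5 P12 P13 P23)
    as (_ & _ & _ & C1 & C3 & C5).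
  rewrite C1 in Eb1. rewrite C3 in Eb3. rewrite C5 in Eb5.
  unfold energy, Ftot.
  rewrite (sqrt_of_sq _ _ (b_ge0 A 1) Eb1), (sqrt_of_sq _ _ (b_ge0 A 3) Eb3), (sqrt_of_sq _ _ (b_ge0 A 5) Eb5).
  rewrite Hb4.
  replace (b A 2) with (sqrt (x A 2)); [reflexivity|].
  unfold x. rewrite sqrt_Rsqr; auto. apply b_ge0.
Qed.

Lemma dfacts a A : has_sides a A ->
  dist (A 1%nat) (A 2%nat) = a 1%nat /\ dist (A 2%nat) (A 3%nat) = a 2%nat /\
  dist (A 3%nat) (A 4%nat) = a 3%nat /\ dist (A 4%nat) (A 0%nat) = a 4%nat /\
  dist (A 0%nat) (A 1%nat) = a 5%nat /\
  b A 1 = dist (A 0%nat) (A 2%nat) /\ b A 2 = dist (A 1%nat) (A 3%nat) /\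
  b A 3 = dist (A 2%nat) (A 4%nat) /\ b A 4 = dist (A 3%nat) (A 0%nat) /\
  b A 5 = dist (A 4%nat) (A 1%nat).
Proof.
  intros Hs.
  pose proof (Hs 1%nat ltac:(lia)) as S1. pose proof (Hs 2%nat ltac:(lia)) as S2.
  pose proof (Hs 3%nat ltac:(lia)) as S3. pose proof (Hs 4%nat ltac:(lia)) as S4.
  pose proof (Hs 5%nat ltac:(lia)) as S5.
  unfold b, pt in *. simpl in *. repeat split; auto.
Qed.

Definition E0 (a q : nat -> R) k := q 2%nat * q 5%nat / (a 1%nat + a 5%nat) + q 1%nat * q 3%nat / 0
  + q 2%nat * q 4%nat / (a 2%nat + a 3%nat) + q 3%nat * q 5%nat / k + q 1%nat * q 4%nat / a 3%nat.
Definition Ek0 (a q : nat -> R) := q 2%nat * q 5%nat / a 2%nat + q 1%nat * q 3%nat / a 5%nat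
  + q 2%nat * q 4%nat / (a 2%nat + a 3%nat) + q 3%nat * q 5%nat / 0 + q 1%nat * q 4%nat / (a 4%nat + a 5%nat).

Lemma energy_x0 a q k A : in_slice a k A -> x A 2 = 0 -> energy q A = E0 a q k.
Proof.
  intros [HC Hb4] Hx. pose proof HC as [Hs _].
  destruct (dfacts a A Hs) as (S1 & S2 & S3 & S4 & S5 & B1e & B2e & B3e & B4e & B5e).
  pose proof (Q1 a A HC) as Q1'. pose proof (Q2 a A HC) as Q2'. unfold pt in Q1', Q2'. simpl in Q1', Q2'.
  assert (Hb2 : b A 2 = 0).
  { unfold x, Rsqr in Hx. pose proof (b_ge0 A 2). nra. }
  assert (E13 : A 1%nat = A 3%nat) by (apply dist_eq0; congruence).
  assert (Hb1 : b A 1 = a 1%nat + a 5%nat).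
  { rewrite B1e. pose proof (dist_triang (A 0%nat) (A 1%nat) (A 2%nat)).
    rewrite (dist_sym (A 1%nat) (A 0%nat)) in Q1'. rewrite (dist_sym (A 2%nat) (A 0%nat)) in Q1'.
    rewrite <- B2e, Hb2 in Q1'. lra. }
  assert (Hb3 : b A 3 = a 2%nat + a 3%nat).
  { rewrite B3e. pose proof (dist_triang (A 2%nat) (A 3%nat) (A 4%nat)).
    rewrite (dist_sym (A 3%nat) (A 2%nat)) in Q2'. rewrite (dist_sym (A 3%nat) (A 1%nat)) in Q2'.
    rewrite <- B2e, Hb2 in Q2'. lra. }
  assert (Hb5 : b A 5 = a 3%nat).
  { rewrite B5e, E13, dist_sym. auto. }
  unfold energy, E0. rewrite Hb1, Hb2, Hb3, Hb4, Hb5. reflexivity.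
Qed.

Lemma energy_k0 a q A : in_slice a 0 A -> energy q A = Ek0 a q /\ x A 2 = a 5%nat * a 5%nat.
Proof.
  intros [HC Hb4]. pose proof HC as [Hs _].
  destruct (dfacts a A Hs) as (S1 & S2 & S3 & S4 & S5 & B1e & B2e & B3e & B4e & B5e).
  pose proof (Q3 a A HC) as Q3'. pose proof (Q4 a A HC) as Q4'. unfold pt in Q3', Q4'. simpl in Q3', Q4'.
  assert (E30 : A 3%nat = A 0%nat) by (apply dist_eq0; congruence).
  assert (Hb1 : b A 1 = a 2%nat).
  { rewrite B1e, <- E30, dist_sym. auto. }
  assert (Hb2 : b A 2 = a 5%nat).
  { rewrite B2e, E30, dist_sym. auto. }
  assert (D30 : dist (A 3%nat) (A 0%nat) = 0) by (rewrite <- B4e; auto).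
  assert (Hb3 : b A 3 = a 2%nat + a 3%nat).
  { rewrite B3e. pose proof (dist_triang (A 2%nat) (A 3%nat) (A 4%nat)).
    rewrite (dist_sym (A 3%nat) (A 2%nat)) in Q4'. rewrite D30 in Q4'. lra. }
  assert (Hb5 : b A 5 = a 4%nat + a 5%nat).
  { rewrite B5e. pose proof (dist_triang (A 4%nat) (A 0%nat) (A 1%nat)).
    rewrite (dist_sym (A 0%nat) (A 4%nat)) in Q3'. rewrite (dist_sym (A 0%nat) (A 3%nat)) in Q3'.
    rewrite D30 in Q3'. lra. }
  split.
  - unfold energy, Ek0. rewrite Hb1, Hb2, Hb3, Hb4, Hb5. reflexivity.
  - unfold x, Rsqr. rewrite Hb2. reflexivity.
Qed.

Lemma slice_nonneg a k A : in_slice a k A ->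
  0 <= x A 2 /\ 0 <= Gf a k (x A 2) /\ 0 <= Hf a (x A 2).
Proof.
  intros [HC Hb4]. pose proof HC as [Hs _].
  pose proof (facts a A Hs) as F. cbv zeta in F.
  destruct F as (Hu & Hv & Hw & H1 & Hz & H4 & H5 & _).
  rewrite Hb4 in Hu.
  split; [unfold x; apply Rle_0_sqr|].
  eapply config_GH; eauto.
Qed.

Lemma good_at a k u : 0 < k -> (forall i, (1 <= i <= 5)%nat -> 0 < a i) ->
  (exists r, 0 < r /\ forall s, Rabs (s - u) < r -> exists A, in_slice a k A /\ s = x A 2) ->
  Good a k u.
Proof.
  intros Hk Ha [r [Hr HI]].
  set (h := r / 2).
  assert (Hh : 0 < h) by (unfold h; lra).
  destruct (HI (u - h)) as [Am [HAm Em]]. { replace (u - h - u) with (- h) by ring. rewrite Rabs_Ropp, Rabs_pos_eq; unfold h; lra. }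
  destruct (HI (u + h)) as [Ap [HAp Ep]]. { replace (u + h - u) with h by ring. rewrite Rabs_pos_eq; unfold h; lra. }
  destruct (HI u) as [A [HA EA]]. { rewrite Rminus_diag, Rabs_R0; lra. }
  destruct (slice_nonneg a k Am HAm) as (Xm & Gm & Hm). rewrite <- Em in Xm, Gm, Hm.
  destruct (slice_nonneg a k Ap HAp) as (Xp & Gp & Hp). rewrite <- Ep in Xp, Gp, Hp.
  assert (Hu : 0 < u) by lra.
  assert (HG : 0 < Gf a k u).
  { assert (Gf a k (u + h) + Gf a k (u - h) - 2 * Gf a k u = - (h * h) / 2) by (unfold Gf, Pf; field).
    nra. }
  assert (HH : 0 < Hf a u).
  { assert (Hf a (u + h) + Hf a (u - h) - 2 * Hf a u = - (h * h) / 2) by (unfold Hf, Qf; field).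
    nra. }
  destruct HA as [HC Hb4]. pose proof HC as [Hs _].
  pose proof (facts a A Hs) as F. cbv zeta in F.
  destruct F as (Hu' & Hv & Hw & H1 & Hz & H4 & H5 & Eb1 & Eb3 & Eb5 & E53 & E13 & E35 & E25 & E24 & E31).
  rewrite Hb4 in Hu'. rewrite <- EA in Hv.
  assert (P12 := closure_prod a A 5 3 1 3 ltac:(valid_tac) ltac:(valid_tac) HC).
  assert (P13 := closure_prod a A 5 3 3 5 ltac:(valid_tac) ltac:(valid_tac) HC).
  assert (P23 := closure_prod a A 1 3 3 5 ltac:(valid_tac) ltac:(valid_tac) HC).
  assert (Pr := closure_prod a A 5 3 2 5 ltac:(valid_tac) ltac:(valid_tac) HC).
  assert (Pz := closure_prod a A 5 3 2 4 ltac:(valid_tac) ltac:(valid_tac) HC).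
  assert (Pt := closure_prod a A 5 3 3 1 ltac:(valid_tac) ltac:(valid_tac) HC).
  rewrite E53, E13 in P12. rewrite E53, E35 in P13. rewrite E13, E35 in P23.
  rewrite E53, E25 in Pr. rewrite E53, E24 in Pz. rewrite E53, E31 in Pt.
  destruct (config_int a k u _ _ _ _ _ _ _ _ Hk Hu Hu' Hv Hw H1 Hz H4 H5 P12 P13 P23 Pr Pz Pt HG HH)
    as (X1 & X2 & X3 & X4 & X5 & X6).
  unfold Good. repeat split; auto.
Qed.


Definition ff (a q : nat -> R) k t :=
  if Rlt_dec 0 k then (if Rlt_dec 0 t then Ftot a q k t else E0 a q k) else Ek0 a q.

Theorem lemma7 (a q : nat -> R) (k : R) :
  (forall i, (1 <= i <= 5)%nat -> 0 < a i) ->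
  (forall i, (1 <= i <= 5)%nat -> 0 < q i) ->
  exists f : R -> R,
    (forall A, in_slice a k A -> energy q A = f (x A 2)) /\
    (forall t,
       interior_pt (fun s => exists A, in_slice a k A /\ s = x A 2) t ->
       (exists d, 0 < d /\ forall u, Rabs (u - t) < d -> ex_derive f u) /\
       ex_derive_n f 2 t /\ 0 < Derive_n f 2 t).
Proof.
  intros Ha Hq. exists (ff a q k). split.
  - intros A HA. unfold ff. destruct (Rlt_dec 0 k) as [Hk|Hk].
    + destruct (Rlt_dec 0 (x A 2)) as [Hx|Hx].
      * apply energy_pos; auto.
      * assert (x A 2 = 0) by (unfold x in *; pose proof (Rle_0_sqr (b A 2)); lra).
        apply energy_x0; auto.
    + assert (k = 0). { destruct HA as [_ Hb4]. pose proof (b_ge0 A 4). lra. }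
      subst k. apply energy_k0; auto.
  - intros t [d [Hd Hint]].
    destruct (Hint t) as [A0 [HA0 Et]]. { rewrite Rminus_diag, Rabs_R0; lra. }
    destruct (Rlt_dec 0 k) as [Hk|Hk].
    + assert (HG : nearP (Good a k) t).
      { exists (d / 2). split; [lra|]. intros u Hu. apply good_at; auto.
        exists (d / 2). split; [lra|]. intros s Hs. apply Hint.
        replace (s - t) with ((s - u) + (u - t)) by ring. pose proof (Rabs_triang (s - u) (u - t)). lra. }
      destruct (analysis a q k t Hk Ha Hq HG) as [[e [He HE]] [HE2 HD2]].
      assert (Heq : forall u, Rabs (u - t) < d / 2 -> Ftot a q k u = ff a q k u).
      { intros u Hu. destruct HG as [d' [Hd' HG']].
        assert (Good a k u).
        { apply good_at; auto. exists (d / 2). split; [lra|]. intros s Hs. apply Hint.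
          replace (s - t) with ((s - u) + (u - t)) by ring. pose proof (Rabs_triang (s - u) (u - t)). lra. }
        destruct H as [Hu0 _]. unfold ff. destruct (Rlt_dec 0 k); [|lra]. destruct (Rlt_dec 0 u); [auto|lra]. }
      assert (Hloc : forall u, Rabs (u - t) < d / 2 -> locally u (fun y => Ftot a q k y = ff a q k y)).
      { intros u Hu. eapply filter_imp; [|apply (loc_ball t (d / 2) u Hu)]. intros y Hy. apply Heq; auto. }
      assert (Ht0 : Rabs (t - t) < d / 2) by (rewrite Rminus_diag, Rabs_R0; lra).
      split; [|split].
      * exists (Rmin e (d / 2)). split; [apply Rmin_pos; lra|]. intros u Hu.
        pose proof (Rmin_l e (d / 2)); pose proof (Rmin_r e (d / 2)).
        apply (ex_derive_ext_loc (Ftot a q k)); [apply Hloc; lra| apply HE; lra].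
      * apply (ex_derive_n_ext_loc (Ftot a q k)); auto.
      * rewrite <- (Derive_n_ext_loc (Ftot a q k)); auto.
    + exfalso. assert (k = 0). { destruct HA0 as [_ Hb4]. pose proof (b_ge0 A0 4). lra. }
      subst k.
      destruct (Hint (t + d / 2)) as [A1 [HA1 E1]].
      { replace (t + d / 2 - t) with (d / 2) by ring. rewrite Rabs_pos_eq; lra. }
      destruct (energy_k0 a q A0 HA0) as [_ X0]. destruct (energy_k0 a q A1 HA1) as [_ X1].
      lra.
Qed.
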